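(* Let $E_0>0$, $n\ge0$ real, $C>0$, and let $\phi:(-\infty,1]\to\mathbb R_+$ be continuous on $[0,1]$ with $\phi(x)=0$ for $x<0$ and $\lim_{x\to0^+}x^{-n}\phi(x)=C$. With $\epsilon=E_0/V-1$, as $V\to E_0^-$, $\varrho(V)\sim4\sqrt2\,\pi C A_n\,\epsilon^{n+3/2}$ and $p(V)\sim2^{3/2}\tfrac{4}{3}\pi C B_n\,\epsilon^{n+5/2}$, where $A_n=\frac{\sqrt\pi\,\Gamma(n+1)}{2\Gamma(n+5/2)}$, $B_n=\frac{3\sqrt\pi\,\Gamma(n+1)}{4\Gamma(n+7/2)}$, and $a\sim b$ means $a/b\to1$. In particular $p\sim K\varrho^\gamma$ as $V\to E_0^-$ with $\gamma=\frac{2n+5}{2n+3}$ and $K=\frac23\,(4\sqrt2\pi C)^{-2/(2n+3)}\,B_n\,A_n^{-(2n+5)/(2n+3)}$.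
   Context: For $V\in(0,E_0]$: $\varrho(V)=\frac{4\pi}{V^3}\int_V^{E_0}\phi(1-E/E_0)E^2\sqrt{(E/V)^2-1}\,dE$, $p(V)=\frac{4\pi}{3V}\int_V^{E_0}\phi(1-E/E_0)[(E/V)^2-1]^{3/2}dE$. $\Gamma$ here denotes the Gamma function. *)

(* Defs.v *)
From Stdlib Require Import Reals Lra ClassicalEpsilon.
Open Scope R_scope.

Definition RInt (f : R -> R) (a b : R) : R :=
  match excluded_middle_informative (exists _ : Riemann_integrable f a b, True) with
  | left H => RiemannInt (proj1_sig (constructive_indefinite_description _ H))
  | right _ => 0
  end.

Definition is_Gamma (s g : R) : Prop :=
  forall eps, 0 < eps -> exists d M, 0 < d /\ 0 < M /\
    forall a b, 0 < a < d -> M < b ->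
      Rabs (RInt (fun t => Rpower t (s - 1) * exp (- t)) a b - g) < eps.

Definition rho (phi : R -> R) (E0 V : R) : R :=
  4 * PI / V ^ 3 *
  RInt (fun E => phi (1 - E / E0) * E ^ 2 * sqrt ((E / V) ^ 2 - 1)) V E0.

(* p(V) = 4 pi / (3 V) * \int_V^{E0} phi(1 - E/E0) [(E/V)^2 - 1]^{3/2} dE,
   with x^{3/2} written x * sqrt x (x >= 0 on [V,E0]) to avoid Rpower's convention at 0 *)
Definition pres (phi : R -> R) (E0 V : R) : R :=
  4 * PI / (3 * V) *
  RInt (fun E => phi (1 - E / E0) * ((E / V) ^ 2 - 1) * sqrt ((E / V) ^ 2 - 1)) V E0.

(* Main.v *)
Require Import Defs.
From Stdlib Require Import Reals Lra Lia ClassicalEpsilon Classical.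
From Coquelicot Require Import Coquelicot.
Open Scope R_scope.


Lemma cont_eps f x :
  (forall e, 0 < e -> exists d, 0 < d /\ forall y, Rabs (y - x) < d -> Rabs (f y - f x) < e) ->
  continuity_pt f x.
Proof.
  intros H e He. destruct (H e He) as [d [Hd H1]]. exists d; split; auto.
  intros y [_ Hy]. simpl in *. unfold R_dist in *. apply H1; auto.
Qed.

Lemma cont_eps_inv f x : continuity_pt f x ->
  forall e, 0 < e -> exists d, 0 < d /\ forall y, Rabs (y - x) < d -> Rabs (f y - f x) < e.
Proof.
  intros H e He. destruct (H e He) as [d [Hd H1]]. exists d; split; auto.
  intros y Hy. destruct (Req_dec y x) as [->|Hne].
  - unfold Rminus; rewrite Rplus_opp_r, Rabs_R0; auto.
  - apply (H1 y). split; [split; [exact I| auto]|]. exact Hy.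
Qed.

Definition P (x y : R) : R :=
  if Rlt_dec 0 x then Rpower x y else if Rle_dec y 0 then 1 else 0.

Lemma P_pos x y : 0 < x -> P x y = Rpower x y.
Proof. intros; unfold P; destruct (Rlt_dec 0 x); [reflexivity|lra]. Qed.

Lemma Rpower_pos x y : 0 < Rpower x y.
Proof. unfold Rpower; apply exp_pos. Qed.

Lemma P_nonneg x y : 0 <= P x y.
Proof.
  unfold P; destruct (Rlt_dec 0 x). left; apply Rpower_pos.
  destruct (Rle_dec y 0); lra.
Qed.

Lemma Rpower_cont x y : 0 < x -> continuity_pt (fun t => Rpower t y) x.
Proof.
  intros Hx. apply derivable_continuous_pt. exists (y * Rpower x (y-1)).
  apply derivable_pt_lim_power; auto.
Qed.

Lemma P_cont x y : 0 <= y -> continuity_pt (fun t => P t y) x.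
Proof.
  intros Hy. apply cont_eps. intros e He.
  destruct (Rlt_le_dec 0 x) as [Hx|Hx].
  - destruct (cont_eps_inv _ _ (Rpower_cont x y Hx) e He) as [d [Hd H1]].
    exists (Rmin d x); split. apply Rmin_glb_lt; auto.
    intros t Ht. assert (Htd : Rabs (t - x) < d) by (eapply Rlt_le_trans; [apply Ht|apply Rmin_l]).
    assert (Htx : Rabs (t - x) < x) by (eapply Rlt_le_trans; [apply Ht|apply Rmin_r]).
    assert (0 < t) by (apply Rabs_def2 in Htx; lra).
    rewrite !P_pos; auto.
  - destruct (Rle_lt_or_eq_dec _ _ Hy) as [Hy'|Hy'].
    + destruct (Rlt_le_dec x 0) as [Hx'|Hx'].
      * exists (- x); split; [lra|]. intros t Ht. apply Rabs_def2 in Ht.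
        unfold P. destruct (Rlt_dec 0 t); [lra|]. destruct (Rlt_dec 0 x); [lra|].
        unfold Rminus; rewrite Rplus_opp_r, Rabs_R0; auto.
      * assert (x = 0) by lra; subst x.
        exists (Rpower e (/ y)); split. apply Rpower_pos.
        intros t Ht. unfold P at 2. destruct (Rlt_dec 0 0); [lra|].
        destruct (Rle_dec y 0); [lra|]. rewrite Rminus_0_r.
        unfold P. destruct (Rlt_dec 0 t).
        -- rewrite Rminus_0_r in Ht. rewrite Rabs_pos_eq in Ht by lra.
           rewrite Rabs_pos_eq by (left; apply Rpower_pos).
           replace e with (Rpower (Rpower e (/ y)) y).
           apply Rlt_Rpower_l; [lra|]. split; [lra|]. exact Ht.
           rewrite Rpower_mult, Rinv_l by (apply Rgt_not_eq; lra); rewrite Rpower_1 by lra; reflexivity.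
        -- destruct (Rle_dec y 0); [lra|]. rewrite Rabs_R0; auto.
    + subst y. exists 1; split; [lra|]. intros t _.
      assert (forall u, P u 0 = 1) as HP.
      { intro u. unfold P. destruct (Rlt_dec 0 u). apply Rpower_O; auto.
        destruct (Rle_dec 0 0); lra. }
      rewrite !HP. unfold Rminus; rewrite Rplus_opp_r, Rabs_R0; auto.
Qed.

Lemma cont_c f x : continuity_pt f x -> continuous f x.
Proof. apply continuity_pt_filterlim. Qed.

Lemma exRInt_cont f a b : (forall x, Rmin a b <= x <= Rmax a b -> continuity_pt f x) -> ex_RInt f a b.
Proof. intros H; apply (ex_RInt_continuous (V:=R_CompleteNormedModule)); intros; apply cont_c; auto. Qed.

Lemma DefsRInt_eq f a b : ex_RInt f a b -> Defs.RInt f a b = RInt f a b.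
Proof.
  intros H. unfold Defs.RInt.
  destruct (excluded_middle_informative _) as [H1|H1].
  - destruct (constructive_indefinite_description _ H1) as [pr Hpr]. simpl.
    symmetry; apply RInt_Reals.
  - exfalso; apply H1. exists (ex_RInt_Reals_0 _ _ _ H); exact I.
Qed.

Lemma cc_mul f g x : continuity_pt f x -> continuity_pt g x -> continuity_pt (fun t => f t * g t) x.
Proof. intros; exact (continuity_pt_mult f g x H H0). Qed.
Lemma cc_plus f g x : continuity_pt f x -> continuity_pt g x -> continuity_pt (fun t => f t + g t) x.
Proof. intros; exact (continuity_pt_plus f g x H H0). Qed.
Lemma cc_minus f g x : continuity_pt f x -> continuity_pt g x -> continuity_pt (fun t => f t - g t) x.
Proof. intros; exact (continuity_pt_minus f g x H H0). Qed.
Lemma cc_opp f x : continuity_pt f x -> continuity_pt (fun t => - f t) x.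
Proof. intros; exact (continuity_pt_opp f x H). Qed.
Lemma cc_const c x : continuity_pt (fun _ => c) x.
Proof. exact (continuity_pt_const (fun _ => c) x (fun _ _ => eq_refl)). Qed.
Lemma cc_id x : continuity_pt (fun t => t) x.
Proof. exact (derivable_continuous_pt _ _ (derivable_pt_id x)). Qed.
Lemma cc_comp f g x : continuity_pt f x -> (forall y, continuity_pt g y) -> continuity_pt (fun t => g (f t)) x.
Proof. intros; exact (continuity_pt_comp f g x H (H0 _)). Qed.
Lemma cc_exp y : continuity_pt exp y.
Proof. apply derivable_continuous_pt, derivable_pt_exp. Qed.
Lemma cc_sqrt y : continuity_pt sqrt y.
Proof. apply continuity_pt_filterlim, continuous_sqrt. Qed.
Lemma cc_abs y : continuity_pt Rabs y.
Proof. apply Rcontinuity_abs. Qed.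
Lemma cc_sin y : continuity_pt sin y.
Proof. apply derivable_continuous_pt, derivable_pt_sin. Qed.
Lemma cc_cos y : continuity_pt cos y.
Proof. apply derivable_continuous_pt, derivable_pt_cos. Qed.
Lemma cc_P f y x : 0 <= y -> continuity_pt f x -> continuity_pt (fun t => P (f t) y) x.
Proof. intros; apply (cc_comp f (fun u => P u y)); auto. intros; apply P_cont; auto. Qed.
Lemma cc_pow f k x : continuity_pt f x -> continuity_pt (fun t => f t ^ k) x.
Proof. intros; apply (cc_comp f (fun u => u ^ k)); auto. intros; apply derivable_continuous_pt, derivable_pt_pow. Qed.
Lemma cc_div f g x : continuity_pt f x -> continuity_pt g x -> g x <> 0 -> continuity_pt (fun t => f t / g t) x.
Proof. intros; exact (continuity_pt_div f g x H H0 H1). Qed.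

Ltac cont := repeat (match goal with
 | |- continuity_pt (fun t => @?f t / ?c) _ => apply (cc_div f (fun _ => c)); [| apply cc_const | try (cbv beta; lra)]
 | |- continuity_pt (fun t => @?f t * @?g t) _ => apply (cc_mul f g)
 | |- continuity_pt (fun t => @?f t + @?g t) _ => apply (cc_plus f g)
 | |- continuity_pt (fun t => @?f t - @?g t) _ => apply (cc_minus f g)
 | |- continuity_pt (fun t => - @?f t) _ => apply (cc_opp f)
 | |- continuity_pt (fun t => @?f t ^ _) _ => apply (cc_pow f)
 | |- continuity_pt (fun t => P (@?f t) _) _ => apply (cc_P f); [try lra|]
 | |- continuity_pt (fun t => exp (@?f t)) _ => apply (cc_comp f exp); [|apply cc_exp]
 | |- continuity_pt (fun t => sqrt (@?f t)) _ => apply (cc_comp f sqrt); [|apply cc_sqrt]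
 | |- continuity_pt (fun t => Rabs (@?f t)) _ => apply (cc_comp f Rabs); [|apply cc_abs]
 | |- continuity_pt (fun t => sin (@?f t)) _ => apply (cc_comp f sin); [|apply cc_sin]
 | |- continuity_pt (fun t => cos (@?f t)) _ => apply (cc_comp f cos); [|apply cc_cos]
 | |- continuity_pt (fun t => t) _ => apply cc_id
 | |- continuity_pt (fun _ => _) _ => apply cc_const
 end).

Lemma test_cont (n : R) x : 0 <= n -> continuity_pt (fun s => P s n * sqrt (1 - s) * exp (- s) + Rabs (s * 2)) x.
Proof. intros. cont. Qed.


Lemma zero_of_small x : (forall e, 0 < e -> Rabs x < e) -> x = 0.
Proof.
  intros H. destruct (Req_dec x 0); auto.
  assert (0 < Rabs x) by (apply Rabs_pos_lt; auto).
  specialize (H _ H1). lra.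
Qed.

Lemma exCh1 (f : R -> R) a b c : a <= b <= c -> ex_RInt f a c -> ex_RInt f a b.
Proof. apply (ex_RInt_Chasles_1 (V:=R_CompleteNormedModule)). Qed.
Lemma exCh2 (f : R -> R) a b c : a <= b <= c -> ex_RInt f a c -> ex_RInt f b c.
Proof. apply (ex_RInt_Chasles_2 (V:=R_CompleteNormedModule)). Qed.
Lemma abs_le_b x y : Rabs x <= y -> - y <= x <= y.
Proof. unfold Rabs; destruct (Rcase_abs x); lra. Qed.
Lemma abs_lt_b x y : Rabs x < y -> - y < x < y.
Proof. unfold Rabs; destruct (Rcase_abs x); lra. Qed.

Lemma RInt_ex_plus_R f a b c : ex_RInt f a b -> ex_RInt f b c -> @eq R (RInt f a c) (RInt f a b + RInt f b c).
Proof. intros; symmetry; apply (RInt_Chasles (V:=R_CompleteNormedModule)); auto. Qed.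

Lemma abs_RInt_bound f a b M : a <= b -> ex_RInt f a b ->
  (forall t, a <= t <= b -> Rabs (f t) <= M) -> Rabs (RInt f a b) <= (b - a) * M.
Proof. intros; apply abs_RInt_le_const; auto. Qed.

Lemma FTC_full (F f : R -> R) c d : c <= d ->
  (forall x, c <= x <= d -> continuity_pt f x) ->
  (forall x, c <= x <= d -> derivable_pt_lim F x (f x)) ->
  @eq R (RInt f c d) (F d - F c).
Proof.
  intros Hcd Hf HF.
  apply is_RInt_unique.
  assert (H := is_RInt_derive (V:=R_CompleteNormedModule) F f c d).
  rewrite Rmin_left, Rmax_right in H by auto.
  apply H. intros; apply is_derive_Reals; auto.
  intros; apply cont_c; auto.
Qed.

Lemma FTC_int (F f : R -> R) a b : a < b ->
  (forall x, a <= x <= b -> continuity_pt f x) ->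
  (forall x, a < x < b -> derivable_pt_lim F x (f x)) ->
  continuity_pt F a -> continuity_pt F b ->
  @eq R (RInt f a b) (F b - F a).
Proof.
  intros Hab Hf HF HFa HFb.
  destruct (continuity_ab_maj f a b (Rlt_le _ _ Hab) Hf) as [xM [HM1 HM2]].
  destruct (continuity_ab_min f a b (Rlt_le _ _ Hab) Hf) as [xm [Hm1 Hm2]].
  set (M := Rabs (f xM) + Rabs (f xm) + 1).
  assert (HMb : forall t, a <= t <= b -> Rabs (f t) <= M).
  { intros t Ht. specialize (HM1 t Ht). specialize (Hm1 t Ht). unfold M.
    apply Rabs_le; split.
    - apply Rle_trans with (f xm); auto. generalize (Rabs_pos (f xM)), (Rabs_pos (f xm)), (Rle_abs (- f xm)).
      rewrite Rabs_Ropp. lra.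
    - apply Rle_trans with (f xM); auto. generalize (Rabs_pos (f xM)), (Rabs_pos (f xm)), (Rle_abs (f xM)). lra. }
  assert (HM0 : 0 < M) by (unfold M; generalize (Rabs_pos (f xM)), (Rabs_pos (f xm)); lra).
  assert (Hex : ex_RInt f a b) by (apply exRInt_cont; intros; apply Hf;
     rewrite Rmin_left, Rmax_right in *; lra).
  apply Rminus_diag_uniq. apply zero_of_small. intros e He.
  destruct (cont_eps_inv _ _ HFa (e/4)) as [d1 [Hd1 H1]]; [lra|].
  destruct (cont_eps_inv _ _ HFb (e/4)) as [d2 [Hd2 H2]]; [lra|].
  set (h := Rmin (Rmin (d1/2) (d2/2)) (Rmin ((b-a)/4) (e / (8 * M)))).
  assert (Hh0 : 0 < h).
  { unfold h. repeat apply Rmin_glb_lt; try lra. apply Rdiv_lt_0_compat; lra. }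
  assert (Hh1 : h <= d1/2) by (unfold h; eapply Rle_trans; [apply Rmin_l|apply Rmin_l]).
  assert (Hh2 : h <= d2/2) by (unfold h; eapply Rle_trans; [apply Rmin_l|apply Rmin_r]).
  assert (Hh3 : h <= (b-a)/4) by (unfold h; eapply Rle_trans; [apply Rmin_r|apply Rmin_l]).
  assert (Hh4 : h <= e/(8*M)) by (unfold h; eapply Rle_trans; [apply Rmin_r|apply Rmin_r]).
  assert (HhM : M * h <= e / 8).
  { apply Rle_trans with (M * (e/(8*M))). apply Rmult_le_compat_l; lra.
    right; field; lra. }
  set (c := a + h). set (d := b - h).
  assert (Hac : ex_RInt f a c) by (apply exCh1 with b; auto; unfold c; lra).
  assert (Hcb : ex_RInt f c b) by (apply exCh2 with a; auto; unfold c; lra).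
  assert (Hcd : ex_RInt f c d) by (apply exCh1 with b; auto; unfold c, d; lra).
  assert (Hdb : ex_RInt f d b) by (apply exCh2 with c; auto; unfold c, d; lra).
  rewrite (RInt_ex_plus_R f a c b Hac Hcb), (RInt_ex_plus_R f c d b Hcd Hdb).
  rewrite (FTC_full F f c d); [| unfold c, d; lra | intros; apply Hf; unfold c, d in *; lra | intros; apply HF; unfold c, d in *; lra].
  assert (A1 : Rabs (RInt f a c) <= (c - a) * M) by (apply abs_RInt_bound; auto; [unfold c; lra| intros; apply HMb; unfold c in *; lra]).
  assert (A2 : Rabs (RInt f d b) <= (b - d) * M) by (apply abs_RInt_bound; auto; [unfold d; lra| intros; apply HMb; unfold d in *; lra]).
  assert (A3 : Rabs (F c - F a) < e/4) by (apply H1; unfold c; rewrite Rabs_pos_eq; lra).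
  assert (A4 : Rabs (F d - F b) < e/4) by (apply H2; unfold d; rewrite Rabs_left; lra).
  unfold c, d in *. replace (a + h - a) with h in A1 by ring. replace (b - (b - h)) with h in A2 by ring.
  apply abs_lt_b in A3. apply abs_lt_b in A4. apply abs_le_b in A1. apply abs_le_b in A2.
  apply Rabs_def1; nra.
Qed.

Lemma RInt_extR (f g : R -> R) a b : (forall x, Rmin a b < x < Rmax a b -> @eq R (f x) (g x)) ->
  @eq R (RInt f a b) (RInt g a b).
Proof. intros; apply (RInt_ext (V:=R_CompleteNormedModule)); auto. Qed.
Lemma ex_RInt_extR (f g : R -> R) a b : (forall x, Rmin a b < x < Rmax a b -> @eq R (f x) (g x)) ->
  ex_RInt f a b -> ex_RInt g a b.
Proof. intros; apply (ex_RInt_ext (V:=R_CompleteNormedModule) f); auto. Qed.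


Lemma exp_le x y : x <= y -> exp x <= exp y.
Proof. intros [H|H]; [left; apply exp_increasing; auto| subst; lra]. Qed.

Lemma ln_le_m1 x : 0 < x -> ln x <= x - 1.
Proof.
  intros Hx. rewrite <- (ln_exp (x - 1)). apply ln_le; auto.
  generalize (exp_ineq1_le (x - 1)); lra.
Qed.

Lemma der_of F f x : is_derive F x (f x) -> derivable_pt_lim F x (f x).
Proof. apply is_derive_Reals. Qed.

Lemma P_le1 t y : 0 <= y -> t <= 1 -> P t y <= 1.
Proof.
  intros Hy Ht. unfold P. destruct (Rlt_dec 0 t).
  - unfold Rpower. rewrite <- exp_0. apply exp_le.
    generalize (ln_le_m1 t r). intros. nra.
  - destruct (Rle_dec y 0); lra.
Qed.

Lemma P_ge1 t y : 0 <= y -> 1 <= t -> 1 <= P t y.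
Proof.
  intros Hy Ht. rewrite P_pos by lra. unfold Rpower. rewrite <- exp_0. apply exp_le.
  assert (0 <= ln t) by (rewrite <- ln_1; apply ln_le; lra). nra.
Qed.

Lemma pow_exp_bound y c : 0 <= y -> 0 < c ->
  exists K, 1 <= K /\ forall t, 0 <= t -> P t y <= K * exp (c * t).
Proof.
  intros Hy Hc. exists (exp (Rabs (y * ln (y / c)))). split.
  - rewrite <- exp_0. apply exp_le. apply Rabs_pos.
  - intros t Ht. destruct Ht as [Ht|Ht].
    + rewrite P_pos by auto. unfold Rpower. rewrite <- exp_plus. apply exp_le.
      destruct Hy as [Hy|Hy].
      * assert (Hl : ln t = ln (c * t / y) + ln (y / c)).
        { rewrite <- ln_mult. f_equal. field. split; lra.
          apply Rdiv_lt_0_compat; nra. apply Rdiv_lt_0_compat; lra. }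
        generalize (ln_le_m1 (c * t / y)). intros H1.
        assert (H1' : ln (c * t / y) <= c * t / y - 1) by (apply H1; apply Rdiv_lt_0_compat; nra).
        generalize (Rle_abs (y * ln (y / c))). intros.
        rewrite Hl. assert (y * (c * t / y) = c * t) by (field; lra).
        assert (y * ln (c * t / y) <= y * (c * t / y - 1)) by (apply Rmult_le_compat_l; lra).
        nra.
      * subst y. rewrite Rmult_0_l. rewrite Rmult_0_l, Rabs_R0. nra.
    + subst t. unfold P. destruct (Rlt_dec 0 0); [lra|].
      rewrite Rmult_0_r, exp_0, Rmult_1_r.
      assert (1 <= exp (Rabs (y * ln (y / c)))) by (rewrite <- exp_0; apply exp_le, Rabs_pos).
      destruct (Rle_dec y 0); lra.
Qed.

Lemma int_exp K c a b : 0 < c -> a <= b ->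
  @eq R (RInt (fun t => K * exp (- c * t)) a b) (K / c * (exp (- c * a) - exp (- c * b))).
Proof.
  intros Hc Hab.
  rewrite (FTC_full (fun t => - K / c * exp (- c * t))); auto.

  - field. lra.
  - intros; cont.
  - intros. apply (der_of (fun t => - K / c * exp (- c * t)) (fun t => K * exp (- c * t))).
    auto_derive; auto. field. lra.
Qed.

Definition gi x t := P t (x - 1) * exp (- t).
Definition Ig x b : R := RInt (gi x) 0 b.

Lemma gi_cont x t : 1 <= x -> continuity_pt (gi x) t.
Proof. intros; unfold gi; cont. Qed.

Lemma gi_nonneg x t : 0 <= gi x t.
Proof. unfold gi. apply Rmult_le_pos. apply P_nonneg. left; apply exp_pos. Qed.

Lemma exI x a b : 1 <= x -> ex_RInt (gi x) a b.
Proof. intros; apply exRInt_cont; intros; apply gi_cont; auto. Qed.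

Lemma gi_bound x c : 1 <= x -> 0 < c < 1 -> exists K, 1 <= K /\ forall t, 0 <= t -> gi x t <= K * exp (- c * t).
Proof.
  intros Hx Hc. destruct (pow_exp_bound (x - 1) (1 - c)) as [K [HK1 HK2]]; try lra.
  exists K; split; auto. intros t Ht. unfold gi.
  replace (- c * t) with ((1 - c) * t + - t) by ring. rewrite exp_plus, <- Rmult_assoc.
  apply Rmult_le_compat_r. left; apply exp_pos. auto.
Qed.

Lemma Ig_nonneg x b : 1 <= x -> 0 <= b -> 0 <= Ig x b.
Proof. intros; apply RInt_ge_0; auto. apply exI; auto. intros; apply gi_nonneg. Qed.

Lemma Ig_split x a b : 1 <= x -> Ig x b = Ig x a + RInt (gi x) a b.
Proof. intros; unfold Ig; apply RInt_ex_plus_R; apply exI; auto. Qed.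

Lemma Ig_mono x b1 b2 : 1 <= x -> 0 <= b1 <= b2 -> Ig x b1 <= Ig x b2.
Proof.
  intros. rewrite (Ig_split x b1 b2); auto.
  assert (0 <= RInt (gi x) b1 b2) by (apply RInt_ge_0; [lra|apply exI; auto|intros; apply gi_nonneg]).
  lra.
Qed.

Lemma Ig_bounded x : 1 <= x -> exists B, forall b, 0 <= b -> Ig x b <= B.
Proof.
  intros Hx. destruct (gi_bound x (1/2)) as [K [HK1 HK2]]; auto; try lra.
  exists (K / (1/2)). intros b Hb. unfold Ig.
  apply Rle_trans with (RInt (fun t => K * exp (- (1/2) * t)) 0 b).
  - apply RInt_le; auto. apply exI; auto. apply exRInt_cont; intros; cont.
    intros; apply HK2; lra.
  - rewrite int_exp by lra. rewrite Rmult_0_r, exp_0.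
    assert (0 < exp (- (1/2) * b)) by apply exp_pos.
    assert (0 < K / (1/2)) by (apply Rdiv_lt_0_compat; lra).
    nra.
Qed.

Definition Gset x := fun v => exists b, 0 <= b /\ v = Ig x b.

Lemma Gset_bound x : 1 <= x -> bound (Gset x).
Proof.
  intros Hx. destruct (Ig_bounded x Hx) as [B HB]. exists B.
  intros v [b [Hb ->]]. auto.
Qed.

Lemma Gset_ne x : exists v, Gset x v.
Proof. exists (Ig x 0). exists 0; split; [lra|auto]. Qed.

Definition Gam x : R :=
  match Rle_dec 1 x with
  | left H => proj1_sig (completeness (Gset x) (Gset_bound x H) (Gset_ne x))
  | right _ => 0 end.

Lemma Gam_lub x : 1 <= x -> is_lub (Gset x) (Gam x).
Proof.
  intros Hx. unfold Gam. destruct (Rle_dec 1 x); [|lra].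
  destruct (completeness _ _ _); simpl; auto.
Qed.

Lemma Gam_lim x : 1 <= x -> forall e, 0 < e ->
  exists B, 0 <= B /\ forall b, B <= b -> Rabs (Ig x b - Gam x) < e.
Proof.
  intros Hx e He. destruct (Gam_lub x Hx) as [Hub Hleast].
  assert (exists b0, 0 <= b0 /\ Gam x - e < Ig x b0).
  { apply NNPP. intros Hn.
    assert (is_upper_bound (Gset x) (Gam x - e)).
    { intros v [b [Hb ->]]. apply Rnot_lt_le. intros Hlt. apply Hn. exists b; auto. }
    specialize (Hleast _ H). lra. }
  destruct H as [b0 [Hb0 H0]]. exists b0; split; auto.
  intros b Hb. assert (Ig x b0 <= Ig x b) by (apply Ig_mono; lra).
  assert (Ig x b <= Gam x) by (apply Hub; exists b; split; [lra|auto]).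
  apply Rabs_def1; lra.
Qed.

Lemma Gam_unique x L : 1 <= x ->
  (forall e, 0 < e -> exists B, forall b, B <= b -> Rabs (Ig x b - L) < e) -> Gam x = L.
Proof.
  intros Hx H. apply Rminus_diag_uniq, zero_of_small. intros e He.
  destruct (H (e/2)) as [B1 H1]; [lra|].
  destruct (Gam_lim x Hx (e/2)) as [B2 [_ H2]]; [lra|].
  specialize (H1 (Rmax B1 B2) (Rmax_l _ _)). specialize (H2 (Rmax B1 B2) (Rmax_r _ _)).
  apply abs_lt_b in H1. apply abs_lt_b in H2. apply Rabs_def1; lra.
Qed.

Lemma Gam_pos x : 1 <= x -> 0 < Gam x.
Proof.
  intros Hx. destruct (Gam_lub x Hx) as [Hub _].
  assert (Ig x 2 <= Gam x) by (apply Hub; exists 2; split; [lra|auto]).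
  rewrite (Ig_split x 1 2) in H by auto.
  assert (0 <= Ig x 1) by (apply Ig_nonneg; lra).
  assert (RInt (fun _ => exp (-2)) 1 2 <= RInt (gi x) 1 2).
  { apply RInt_le; try lra. apply exRInt_cont; intros; cont. apply exI; auto.
    intros t Ht. unfold gi. rewrite <- (Rmult_1_l (exp (-2))).
    apply Rmult_le_compat. lra. left; apply exp_pos. apply P_ge1; lra. apply exp_le; lra. }
  rewrite RInt_const in H1. unfold scal in H1; simpl in H1. unfold mult in H1; simpl in H1.
  assert (0 < exp (-2)) by apply exp_pos. lra.
Qed.

Lemma isG_Gam s G : 1 <= s -> is_Gamma s G -> G = Gam s.
Proof.
  intros Hs HG. apply Rminus_diag_uniq, zero_of_small. intros e He.
  destruct (HG (e/3)) as [d [M [Hd [HM H1]]]]; [lra|].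
  destruct (Gam_lim s Hs (e/3)) as [B [HB H2]]; [lra|].
  set (a := Rmin (d/2) (Rmin (e/3) (1/2))).
  assert (Ha0 : 0 < a) by (unfold a; repeat apply Rmin_glb_lt; lra).
  assert (Ha1 : a < d) by (unfold a; eapply Rle_lt_trans; [apply Rmin_l|lra]).
  assert (Ha2 : a <= e/3) by (unfold a; eapply Rle_trans; [apply Rmin_r|apply Rmin_l]).
  assert (Ha3 : a <= 1/2) by (unfold a; eapply Rle_trans; [apply Rmin_r|apply Rmin_r]).
  set (b := Rmax (M + 1) (B + 1)).
  assert (Hb1 : M < b) by (unfold b; generalize (Rmax_l (M+1) (B+1)); lra).
  assert (Hb2 : B <= b) by (unfold b; generalize (Rmax_r (M+1) (B+1)); lra).
  assert (Hb3 : 1 <= b) by (unfold b; generalize (Rmax_l (M+1) (B+1)); lra).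
  specialize (H1 a b (conj Ha0 Ha1) Hb1). specialize (H2 b Hb2).
  assert (Heq : Defs.RInt (fun t => Rpower t (s - 1) * exp (- t)) a b = RInt (gi s) a b).
  { assert (Hext : forall t, Rmin a b < t < Rmax a b -> gi s t = Rpower t (s - 1) * exp (- t)).
    { intros t Ht. rewrite Rmin_left, Rmax_right in Ht by lra. unfold gi. rewrite P_pos; auto. lra. }
    rewrite DefsRInt_eq. symmetry; apply RInt_ext; auto.
    apply (ex_RInt_ext (V:=R_CompleteNormedModule) (gi s)); auto. apply exI; auto. }
  rewrite Heq in H1. rewrite (Ig_split s a b) in H2 by auto.
  assert (0 <= Ig s a) by (apply Ig_nonneg; lra).
  assert (Ig s a <= a).
  { unfold Ig. apply Rle_trans with (RInt (fun _ => 1) 0 a).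
    apply RInt_le; try lra. apply exI; auto. apply exRInt_cont; intros; cont.
    intros t Ht. unfold gi. rewrite <- (Rmult_1_l 1). apply Rmult_le_compat.
    apply P_nonneg. left; apply exp_pos. apply P_le1; lra. rewrite <- exp_0; apply exp_le; lra.
    rewrite RInt_const. unfold scal; simpl; unfold mult; simpl. lra. }
  apply abs_lt_b in H1. apply abs_lt_b in H2. apply Rabs_def1; lra.
Qed.


Lemma dpl_ext_loc f g x l d : 0 < d -> (forall t, Rabs (t - x) < d -> f t = g t) ->
  derivable_pt_lim f x l -> derivable_pt_lim g x l.
Proof.
  intros Hd Hfg H e He. destruct (H e He) as [del Hdel].
  assert (Hm : 0 < Rmin del d) by (apply Rmin_glb_lt; auto; apply cond_pos).
  exists (mkposreal _ Hm). intros h Hh0 Hh. simpl in Hh.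
  rewrite <- !Hfg. apply Hdel; auto. eapply Rlt_le_trans; [apply Hh|apply Rmin_l].
  unfold Rminus; rewrite Rplus_opp_r, Rabs_R0; auto.
  replace (x + h - x) with h by ring. eapply Rlt_le_trans; [apply Hh|apply Rmin_r].
Qed.

Lemma dpl_eq f x l l' : derivable_pt_lim f x l -> l = l' -> derivable_pt_lim f x l'.
Proof. intros; subst; auto. Qed.

Lemma dpl_mul f g x lf lg : derivable_pt_lim f x lf -> derivable_pt_lim g x lg ->
  derivable_pt_lim (fun t => f t * g t) x (lf * g x + f x * lg).
Proof. intros. exact (derivable_pt_lim_mult f g x lf lg H H0). Qed.

Lemma P_der s y : 0 < s -> derivable_pt_lim (fun t => P t y) s (y * P s (y - 1)).
Proof.
  intros Hs. rewrite P_pos by auto.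
  apply (dpl_ext_loc (fun t => Rpower t y)) with s; auto.
  intros t Ht. apply Rabs_def2 in Ht. rewrite P_pos; auto; lra.
  apply derivable_pt_lim_power; auto.
Qed.

Lemma P1m_der s y : s < 1 -> derivable_pt_lim (fun t => P (1 - t) y) s (- y * P (1 - s) (y - 1)).
Proof.
  intros Hs.
  assert (H := derivable_pt_lim_comp (fun t => 1 - t) (fun u => P u y) s (-1) (y * P (1 - s) (y - 1))).
  apply (dpl_eq _ _ _ _ (H ltac:(apply (der_of (fun t => 1 - t) (fun _ => -1)); auto_derive; auto; ring)
     ltac:(apply P_der; lra))). ring.
Qed.

Lemma P_0 u : P u 0 = 1.
Proof. unfold P. destruct (Rlt_dec 0 u). apply Rpower_O; auto. destruct (Rle_dec 0 0); lra. Qed.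

Lemma P_at0 y : 0 < y -> P 0 y = 0.
Proof. intros. unfold P. destruct (Rlt_dec 0 0); [lra|]. destruct (Rle_dec y 0); lra. Qed.

Lemma P_at1 y : P 1 y = 1.
Proof. rewrite P_pos by lra. unfold Rpower. rewrite ln_1, Rmult_0_r, exp_0; auto. Qed.

Lemma P_succ s y : 0 < s -> P s (y + 1) = s * P s y.
Proof. intros. rewrite !P_pos by auto. rewrite Rpower_plus, Rpower_1 by auto. ring. Qed.

Lemma P_mulb a b y : 0 < a -> 0 < b -> P (a * b) y = P a y * P b y.
Proof. intros. rewrite !P_pos by nra. rewrite Rpower_mult_distr; auto. Qed.

Lemma RInt_lin2 (g h : R -> R) a b A B : ex_RInt g a b -> ex_RInt h a b ->
  @eq R (RInt (fun s => A * g s - B * h s) a b) (A * RInt g a b - B * RInt h a b).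
Proof.
  intros Hg Hh. apply is_RInt_unique.
  assert (H1 := is_RInt_scal (V:=R_CompleteNormedModule) g a b A _ (RInt_correct _ _ _ Hg)).
  assert (H2 := is_RInt_scal (V:=R_CompleteNormedModule) h a b B _ (RInt_correct _ _ _ Hh)).
  assert (H3 := is_RInt_minus _ _ _ _ _ _ H1 H2).
  exact H3.
Qed.

Definition bi x y s := P s (x - 1) * P (1 - s) (y - 1).
Definition Bf x y : R := RInt (bi x y) 0 1.

Lemma bi_cont x y s : 1 <= x -> 1 <= y -> continuity_pt (bi x y) s.
Proof. intros; unfold bi; cont. Qed.

Lemma exB x y a b : 1 <= x -> 1 <= y -> ex_RInt (bi x y) a b.
Proof. intros; apply exRInt_cont; intros; apply bi_cont; auto. Qed.

Lemma Beta_rec x y : 1 <= x -> 1 <= y -> (x + y) * Bf x (y + 1) = y * Bf x y.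
Proof.
  intros Hx Hy.
  set (F := fun s => P s x * P (1 - s) y).
  set (f := fun s => x * P s (x - 1) * P (1 - s) y - y * P s x * P (1 - s) (y - 1)).
  assert (H0 : @eq R (RInt f 0 1) (F 1 - F 0)).
  { apply FTC_int; try lra.
    - intros; unfold f; cont.
    - intros s Hs. unfold F, f.
      eapply dpl_eq. apply dpl_mul. apply P_der; lra. apply P1m_der; lra. cbv beta; ring.
    - unfold F; cont.
    - unfold F; cont. }
  unfold F in H0. rewrite P_at0 in H0 by lra. replace (1 - 1) with 0 in H0 by ring.
  rewrite P_at0 in H0 by lra. rewrite Rmult_0_r, Rmult_0_l, Rminus_0_r in H0.
  assert (H1 : @eq R (RInt f 0 1) (RInt (fun s => (x + y) * bi x (y + 1) s - y * bi x y s) 0 1)).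
  { apply RInt_extR. intros s Hs. rewrite Rmin_left, Rmax_right in Hs by lra.
    unfold f, bi. replace (y + 1 - 1) with y by ring.
    assert (E1 : P s x = s * P s (x - 1)) by (rewrite <- P_succ; [f_equal; ring | lra]).
    assert (E2 : P (1 - s) y = (1 - s) * P (1 - s) (y - 1)) by (rewrite <- P_succ; [f_equal; ring | lra]).
    rewrite E1, E2. ring. }
  rewrite H1, RInt_lin2 in H0 by (apply exB; lra).
  unfold Bf. lra.
Qed.

Lemma Beta_one x : 1 <= x -> Bf x 1 = / x.
Proof.
  intros Hx. unfold Bf.
  assert (H1 : @eq R (RInt (bi x 1) 0 1) (RInt (fun s => P s (x - 1)) 0 1)).
  { apply RInt_extR. intros. unfold bi. replace (1 - 1) with 0 by ring. rewrite P_0. ring. }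
  rewrite H1. rewrite (FTC_int (fun s => P s x / x)); try lra.
  - rewrite P_at1, P_at0 by lra. field. lra.
  - intros; cont.
  - intros s Hs. eapply dpl_eq.
    apply (derivable_pt_lim_div (fun t => P t x) (fun _ => x)). apply P_der; lra.
    apply derivable_pt_lim_const. lra. unfold Rsqr. field. lra.
  - apply cc_div; [cont| cont | lra].
  - apply cc_div; [cont| cont | lra].
Qed.

Lemma Gam_1 : Gam 1 = 1.
Proof.
  apply Gam_unique; [lra|]. intros e He. exists (Rmax 0 (/ e)). intros b Hb.
  assert (Hb0 : 0 <= b) by (eapply Rle_trans; [apply Rmax_l|apply Hb]).
  assert (Hbe : / e <= b) by (eapply Rle_trans; [apply Rmax_r|apply Hb]).
  unfold Ig.
  assert (H1 : @eq R (RInt (gi 1) 0 b) (RInt (fun t => 1 * exp (- (1) * t)) 0 b)).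
  { apply RInt_extR; intros. unfold gi. replace (1 - 1) with 0 by ring. rewrite P_0. f_equal; f_equal; ring. }
  rewrite H1, (int_exp 1 1 0 b) by lra. rewrite Rmult_0_r, exp_0.
  replace (- (1) * b) with (- b) by ring.
  assert (1 + b <= exp b) by apply exp_ineq1_le.
  assert (exp (- b) * exp b = 1) by (rewrite <- exp_plus; replace (- b + b) with 0 by ring; apply exp_0).
  assert (0 < exp (- b)) by apply exp_pos.
  assert (e * b >= 1) by (apply Rle_ge; apply Rmult_le_reg_l with (/ e);
    [apply Rinv_0_lt_compat; auto| rewrite <- Rmult_assoc, Rinv_l, Rmult_1_l, Rmult_1_r; lra]).
  replace (1 / 1 * (1 - exp (- b)) - 1) with (- exp (- b)) by field.
  rewrite Rabs_Ropp, Rabs_pos_eq by lra. nra.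
Qed.


Lemma RInt_scalR (f : R -> R) a b k : ex_RInt f a b ->
  @eq R (RInt (fun t => k * f t) a b) (k * RInt f a b).
Proof. intros H. exact (RInt_scal (V:=R_CompleteNormedModule) f a b k H). Qed.

Lemma exp_le_1p2 u : 0 <= u <= 1/2 -> exp u <= 1 + 2 * u.
Proof.
  intros Hu. assert (H1 := exp_ineq1_le (- u)).
  assert (H2 : exp u * exp (- u) = 1) by (rewrite <- exp_plus; replace (u + - u) with 0 by ring; apply exp_0).
  assert (0 < exp u) by apply exp_pos. nra.
Qed.

Lemma ln1m_lower u : 0 <= u <= 1/2 -> - u - 2 * u ^ 2 <= ln (1 - u).
Proof.
  intros Hu. assert (Hp : 0 < 1 - u) by lra.
  assert (H1 := ln_le_m1 (/ (1 - u)) (Rinv_0_lt_compat _ Hp)).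
  rewrite ln_Rinv in H1 by auto.
  assert (H2 : / (1 - u) - 1 <= u + 2 * u ^ 2).
  { apply Rmult_le_reg_l with (1 - u); auto.
    replace ((1 - u) * (/ (1 - u) - 1)) with u by (field; lra). nra. }
  lra.
Qed.

Lemma key_small M t : 2 <= M -> 0 < t <= M / 2 ->
  Rabs (P (1 - t / M) (M - 1) - exp (- t)) <= exp (- t) * ((2 * t + 2 * t ^ 2) / M).
Proof.
  intros HM Ht. set (u := t / M).
  assert (Hu : 0 < u <= 1/2).
  { unfold u; split. apply Rdiv_lt_0_compat; lra.
    apply Rmult_le_reg_l with M; [lra|]. field_simplify; lra. }
  assert (HtM : t = M * u) by (unfold u; field; lra).
  rewrite P_pos by lra. unfold Rpower.
  assert (Lup : ln (1 - u) <= - u) by (generalize (ln_le_m1 (1 - u)); intros; apply Rle_trans with (1 - u - 1); [apply H; lra|lra]).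
  assert (Llo := ln1m_lower u ltac:(lra)).
  assert (E1 : exp ((M - 1) * ln (1 - u)) <= exp (- t) * exp u).
  { rewrite <- exp_plus. apply exp_le. rewrite HtM. nra. }
  assert (E2 : exp (- t) * exp (- (2 * t ^ 2 / M)) <= exp ((M - 1) * ln (1 - u))).
  { rewrite <- exp_plus. apply exp_le. rewrite HtM.
    replace (- (M * u) + - (2 * (M * u) ^ 2 / M)) with (M * (- u - 2 * u ^ 2)) by (field; lra).
    assert (- u - 2 * u ^ 2 <= 0) by nra. nra. }
  assert (E3 : exp u <= 1 + 2 * u) by (apply exp_le_1p2; lra).
  assert (E4 : 1 - 2 * t ^ 2 / M <= exp (- (2 * t ^ 2 / M))) by (generalize (exp_ineq1_le (- (2 * t ^ 2 / M))); lra).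
  assert (Ee : 0 < exp (- t)) by apply exp_pos.
  assert (Hut : 2 * u = 2 * t / M) by (unfold u; field; lra).
  assert (Hq : 0 <= 2 * t ^ 2 / M) by (apply Rmult_le_pos; [nra| left; apply Rinv_0_lt_compat; lra]).
  assert (Hq2 : 0 <= 2 * t / M) by (apply Rmult_le_pos; [nra| left; apply Rinv_0_lt_compat; lra]).
  replace ((2 * t + 2 * t ^ 2) / M) with (2 * t / M + 2 * t ^ 2 / M) by (field; lra).
  apply Rabs_le. split.
  - assert (exp (- t) * (1 - 2 * t ^ 2 / M) <= exp (- t) * exp (- (2 * t ^ 2 / M))) by (apply Rmult_le_compat_l; lra).
    nra.
  - assert (exp (- t) * exp u <= exp (- t) * (1 + 2 * u)) by (apply Rmult_le_compat_l; lra).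
    nra.
Qed.

Lemma key_large M t : 2 <= M -> 0 <= t < M -> P (1 - t / M) (M - 1) <= exp (- t / 2).
Proof.
  intros HM Ht. set (u := t / M).
  assert (Hu : 0 <= u < 1).
  { unfold u; split. apply Rmult_le_pos; [lra| left; apply Rinv_0_lt_compat; lra].
    apply Rmult_lt_reg_l with M; [lra|]. field_simplify; lra. }
  assert (HtM : t = M * u) by (unfold u; field; lra).
  rewrite P_pos by lra. unfold Rpower. apply exp_le.
  assert (Lup : ln (1 - u) <= - u) by (generalize (ln_le_m1 (1 - u)); intros; apply Rle_trans with (1 - u - 1); [apply H; lra|lra]).
  rewrite HtM. nra.
Qed.

Definition hM x M t := P t (x - 1) * P (1 - t / M) (M - 1).

Lemma hM_cont x M t : 1 <= x -> 1 <= M -> continuity_pt (hM x M) t.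
Proof. intros; unfold hM; cont. Qed.

Lemma Bsub x M : 1 <= x -> 2 <= M -> Rpower M x * Bf x M = RInt (hM x M) 0 M.
Proof.
  intros Hx HM. unfold Bf.
  assert (H := RInt_comp_lin (V:=R_CompleteNormedModule) (bi x M) (/ M) 0 0 M (exB x M _ _ Hx ltac:(lra))).
  replace (/ M * 0 + 0) with 0 in H by ring. replace (/ M * M + 0) with 1 in H by (field; lra).
  simpl in H. rewrite <- H.
  change (scal (/ M)) with (fun v : R => / M * v) in H.
  assert (Hex : ex_RInt (fun y => bi x M (/ M * y + 0)) 0 M).
  { apply exRInt_cont. intros. unfold bi. cont. }
  rewrite <- RInt_scalR.
  2:{ apply (ex_RInt_extR (fun y => / M * bi x M (/ M * y + 0))). intros; reflexivity.
      apply exRInt_cont. intros. unfold bi. cont. }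
  symmetry. apply RInt_extR. intros t Ht. rewrite Rmin_left, Rmax_right in Ht by lra.
  unfold hM, bi, scal; simpl; unfold mult; simpl.
  replace (/ M * t + 0) with (t * / M) by ring.
  rewrite P_mulb by (try apply Rinv_0_lt_compat; lra).
  rewrite (P_pos (/ M)) by (apply Rinv_0_lt_compat; lra).
  assert (Ex : Rpower M x = M * Rpower M (x - 1)).
  { replace (Rpower M x) with (Rpower M ((x - 1) + 1)) by (f_equal; ring).
    rewrite Rpower_plus, Rpower_1 by lra. ring. }
  rewrite Ex.
  assert (Ei : Rpower (/ M) (x - 1) = / Rpower M (x - 1)).
  { unfold Rpower. rewrite ln_Rinv by lra. rewrite <- exp_Ropp. f_equal; ring. }
  rewrite Ei. replace (1 - t * / M) with (1 - t / M) by (unfold Rdiv; ring).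
  assert (0 < Rpower M (x - 1)) by apply Rpower_pos.
  field. lra.
Qed.

Lemma d_small_bound x M t K1 : 1 <= x -> 2 <= M -> 0 < t <= M / 2 ->
  (forall t, 0 <= t -> P t (x - 1) * (2 * t + 2 * t ^ 2) <= K1 * exp (1/2 * t)) ->
  Rabs (hM x M t - gi x t) <= K1 / M * exp (- (1/2) * t).
Proof.
  intros Hx HM Ht HK. unfold hM, gi.
  replace (P t (x - 1) * P (1 - t / M) (M - 1) - P t (x - 1) * exp (- t))
    with (P t (x - 1) * (P (1 - t / M) (M - 1) - exp (- t))) by ring.
  rewrite Rabs_mult, (Rabs_pos_eq (P t (x - 1))) by apply P_nonneg.
  apply Rle_trans with (P t (x - 1) * (exp (- t) * ((2 * t + 2 * t ^ 2) / M))).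
  apply Rmult_le_compat_l. apply P_nonneg. apply key_small; auto.
  specialize (HK t ltac:(lra)).
  assert (Hee : exp (- t) * exp (1/2 * t) = exp (- (1/2) * t)).
  { rewrite <- exp_plus. f_equal. field. }
  assert (0 < exp (- t)) by apply exp_pos.
  replace (P t (x - 1) * (exp (- t) * ((2 * t + 2 * t ^ 2) / M)))
    with (exp (- t) / M * (P t (x - 1) * (2 * t + 2 * t ^ 2))) by (field; lra).
  apply Rle_trans with (exp (- t) / M * (K1 * exp (1 / 2 * t))).
  apply Rmult_le_compat_l; auto. apply Rmult_le_pos; [lra| left; apply Rinv_0_lt_compat; lra].
  rewrite <- Hee. right. field. lra.
Qed.

Lemma d_large_bound x M t Kc : 1 <= x -> 2 <= M -> 0 <= t < M ->
  (forall t, 0 <= t -> P t (x - 1) <= Kc * exp (1/4 * t)) ->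
  Rabs (hM x M t - gi x t) <= 2 * Kc * exp (- (1/4) * t).
Proof.
  intros Hx HM Ht HK. unfold hM, gi.
  assert (H1 := key_large M t HM Ht).
  assert (H2 : exp (- t) <= exp (- t / 2)) by (apply exp_le; lra).
  assert (H3 := P_nonneg t (x - 1)). assert (H4 := P_nonneg (1 - t / M) (M - 1)).
  assert (H5 : 0 < exp (- t)) by apply exp_pos.
  specialize (HK t ltac:(lra)).
  assert (Hee : exp (1/4 * t) * exp (- t / 2) = exp (- (1/4) * t)) by (rewrite <- exp_plus; f_equal; field).
  assert (0 < exp (- t / 2)) by apply exp_pos.
  apply Rle_trans with (2 * (P t (x - 1) * exp (- t / 2))).
  - apply Rabs_le; split; nra.
  - rewrite <- Hee. nra.
Qed.

Lemma exp_neg_le_inv y : 0 < y -> exp (- y) <= / y.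
Proof.
  intros Hy. assert (H := exp_ineq1_le y).
  assert (H2 : exp y * exp (- y) = 1) by (rewrite <- exp_plus; replace (y + - y) with 0 by ring; apply exp_0).
  assert (0 < exp (- y)) by apply exp_pos.
  apply Rmult_le_reg_l with y; auto. rewrite Rinv_r by lra. nra.
Qed.

Lemma P3 x : 1 <= x -> forall e, 0 < e ->
  exists M0, 2 <= M0 /\ forall M, M0 <= M -> Rabs (Rpower M x * Bf x M - Gam x) < e.
Proof.
  intros Hx e He.
  destruct (pow_exp_bound x (1/2)) as [Ka [Ka1 Ka2]]; try lra.
  destruct (pow_exp_bound (x + 1) (1/2)) as [Kb [Kb1 Kb2]]; try lra.
  destruct (pow_exp_bound (x - 1) (1/4)) as [Kc [Kc1 Kc2]]; try lra.
  set (K1 := 2 * (Ka + Kb)).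
  assert (HK1 : forall t, 0 <= t -> P t (x - 1) * (2 * t + 2 * t ^ 2) <= K1 * exp (1/2 * t)).
  { intros t Ht. destruct Ht as [Ht|Ht].
    - assert (E1 : P t x = t * P t (x - 1)) by (rewrite <- P_succ; [f_equal; ring| lra]).
      assert (E2 : P t (x + 1) = t * P t x) by (rewrite <- P_succ; [f_equal; ring| lra]).
      specialize (Ka2 t ltac:(lra)). specialize (Kb2 t ltac:(lra)).
      unfold K1. nra.
    - subst t. assert (0 < exp (1/2 * 0)) by apply exp_pos. unfold K1. nra. }
  destruct (Gam_lim x Hx (e/3)) as [B [HB HBl]]; [lra|].
  exists (Rmax (Rmax 2 B) (Rmax (6 * K1 / e + 1) (192 * Kc / e + 1))).
  split. eapply Rle_trans; [|apply Rmax_l]; apply Rmax_l.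
  intros M HM.
  assert (HM2 : 2 <= M) by (eapply Rle_trans; [|apply HM]; eapply Rle_trans; [|apply Rmax_l]; apply Rmax_l).
  assert (HMB : B <= M) by (eapply Rle_trans; [|apply HM]; eapply Rle_trans; [|apply Rmax_l]; apply Rmax_r).
  assert (HM3 : 6 * K1 / e + 1 <= M) by (eapply Rle_trans; [|apply HM]; eapply Rle_trans; [|apply Rmax_r]; apply Rmax_l).
  assert (HM4 : 192 * Kc / e + 1 <= M) by (eapply Rle_trans; [|apply HM]; eapply Rle_trans; [|apply Rmax_r]; apply Rmax_r).
  rewrite Bsub by auto.
  set (d := fun t => hM x M t - gi x t).
  assert (Hexd : forall a b, ex_RInt d a b).
  { intros; apply exRInt_cont; intros; unfold d. apply cc_minus; [apply hM_cont|apply gi_cont]; lra. }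
  assert (Hexad : forall a b, ex_RInt (fun t => Rabs (d t)) a b).
  { intros; apply exRInt_cont; intros; unfold d. apply (cc_comp (fun t => hM x M t - gi x t) Rabs).
    apply cc_minus; [apply hM_cont|apply gi_cont]; lra. apply cc_abs. }
  assert (Hdiff : RInt (hM x M) 0 M - Ig x M = RInt d 0 (M/2) + RInt d (M/2) M).
  { rewrite <- RInt_ex_plus_R by auto. unfold Ig.
    assert (H := RInt_lin2 (hM x M) (gi x) 0 M 1 1).
    rewrite !Rmult_1_l in H. rewrite <- H.
    apply RInt_extR; intros; unfold d; ring.
    apply exRInt_cont; intros; apply hM_cont; lra. apply exI; auto. }
  assert (Bd1 : Rabs (RInt d 0 (M/2)) <= 2 * K1 / M).
  { eapply Rle_trans. apply abs_RInt_le. lra. auto.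
    apply Rle_trans with (RInt (fun t => K1 / M * exp (- (1/2) * t)) 0 (M/2)).
    apply RInt_le; auto. lra. apply exRInt_cont; intros; cont.
    intros t Ht. unfold d. apply d_small_bound; auto; lra.
    rewrite int_exp by lra. rewrite Rmult_0_r, exp_0.
    assert (0 < exp (- (1/2) * (M / 2))) by apply exp_pos.
    assert (0 <= K1) by (unfold K1; lra).
    assert (0 <= K1 / M) by (apply Rmult_le_pos; auto; left; apply Rinv_0_lt_compat; lra).
    replace (2 * K1 / M) with (K1 / M / (1/2) * 1) by (field; lra).
    apply Rmult_le_compat_l. apply Rmult_le_pos; auto; lra. lra. }
  assert (Bd2 : Rabs (RInt d (M/2) M) <= 64 * Kc / M).
  { eapply Rle_trans. apply abs_RInt_le. lra. auto.
    apply Rle_trans with (RInt (fun t => 2 * Kc * exp (- (1/4) * t)) (M/2) M).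
    apply RInt_le; auto. lra. apply exRInt_cont; intros; cont.
    intros t Ht. unfold d. apply d_large_bound; auto; lra.
    rewrite int_exp by lra.
    assert (0 < exp (- (1/4) * M)) by apply exp_pos.
    assert (H8 := exp_neg_le_inv (M / 8) ltac:(lra)).
    replace (- (1/4) * (M / 2)) with (- (M / 8)) by field.
    assert (Hq8 : / (M / 8) = 8 / M) by (field; lra). rewrite Hq8 in H8.
    replace (64 * Kc / M) with (2 * Kc / (1/4) * (8 / M)) by (field; lra).
    apply Rmult_le_compat_l. lra. lra. }
  assert (HG := HBl M HMB).
  assert (Hc1 : 2 * K1 / M < e / 3).
  { apply Rmult_lt_reg_l with (3 * M / e). apply Rdiv_lt_0_compat; lra.
    replace (3 * M / e * (2 * K1 / M)) with (6 * K1 / e) by (field; lra).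
    replace (3 * M / e * (e / 3)) with M by (field; lra). lra. }
  assert (Hc2 : 64 * Kc / M < e / 3).
  { apply Rmult_lt_reg_l with (3 * M / e). apply Rdiv_lt_0_compat; lra.
    replace (3 * M / e * (64 * Kc / M)) with (192 * Kc / e) by (field; lra).
    replace (3 * M / e * (e / 3)) with M by (field; lra). lra. }
  apply abs_le_b in Bd1. apply abs_le_b in Bd2. apply abs_lt_b in HG.
  apply Rabs_def1; lra.
Qed.


Lemma rec_id a b (N : nat) : 1 <= a -> 1 <= b ->
  Bf a b * Bf (a + b) (INR N + 1) * (a + b + INR N) =
  Bf a (b + INR N) * Bf b (INR N + 1) * (b + INR N).
Proof.
  intros Ha Hb. induction N as [|N IH].
  - simpl. rewrite !Rplus_0_r, Rplus_0_l, !Beta_one by lra. field. lra.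
  - rewrite S_INR. assert (HN := pos_INR N). set (n := INR N) in *.
    assert (h1 := Beta_rec (a + b) (n + 1) ltac:(lra) ltac:(lra)).
    assert (h2 := Beta_rec a (b + n) ltac:(lra) ltac:(lra)).
    assert (h3 := Beta_rec b (n + 1) ltac:(lra) ltac:(lra)).
    replace (b + (n + 1)) with (b + n + 1) by ring.
    set (B0 := Bf a b) in *. set (X := Bf (a + b) (n + 1)) in *. set (X' := Bf (a + b) (n + 1 + 1)) in *.
    set (Y := Bf a (b + n)) in *. set (Y' := Bf a (b + n + 1)) in *.
    set (Z := Bf b (n + 1)) in *. set (Z' := Bf b (n + 1 + 1)) in *.
    assert (E1 : B0 * X' * (a + b + (n + 1)) = B0 * (n + 1) * X) by (transitivity (B0 * ((a + b + (n + 1)) * X')); [ring| rewrite h1; ring]).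
    assert (E2 : Y' * Z' * (b + n + 1) = Y' * (n + 1) * Z) by (transitivity (Y' * ((b + (n + 1)) * Z')); [ring| rewrite h3; ring]).
    rewrite E1, E2.
    assert (E3 : B0 * X = Y' * Z).
    { apply Rmult_eq_reg_l with (a + b + n); [|lra].
      replace ((a + b + n) * (B0 * X)) with (B0 * X * (a + b + n)) by ring. rewrite IH.
      replace ((a + b + n) * (Y' * Z)) with (((a + b + n) * Y') * Z) by ring.
      replace (a + (b + n)) with (a + b + n) in h2 by ring. rewrite h2. ring. }
    replace (B0 * (n + 1) * X) with ((n + 1) * (B0 * X)) by ring. rewrite E3. ring.
Qed.

Lemma cv_inv c d : 1 <= d -> Un_cv (fun N => c / (INR N + d)) 0.
Proof.
  intros Hd e He. destruct (INR_unbounded (Rabs c / e)) as [N0 HN0].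
  exists N0. intros n Hn. unfold Rdist. rewrite Rminus_0_r.
  assert (Hn' : INR N0 <= INR n) by (apply le_INR; lia).
  assert (Hp : 0 < INR n + d) by (generalize (pos_INR n); lra).
  unfold Rdiv. rewrite Rabs_mult, Rabs_inv, (Rabs_pos_eq (INR n + d)) by lra.
  apply Rmult_lt_reg_l with (INR n + d); auto.
  replace ((INR n + d) * (Rabs c * / (INR n + d))) with (Rabs c) by (field; lra).
  assert (Rabs c < e * (INR n + d)).
  { apply Rmult_lt_reg_l with (/ e). apply Rinv_0_lt_compat; auto.
    replace (/ e * (e * (INR n + d))) with (INR n + d) by (field; lra).
    unfold Rdiv in HN0. rewrite Rmult_comm. lra. }
  lra.
Qed.

Lemma cv_const c : Un_cv (fun _ => c) c.
Proof. intros e He; exists 0%nat; intros; unfold Rdist; rewrite Rminus_eq_0, Rabs_R0; auto. Qed.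

Lemma P3_seq x (m : nat -> R) : 1 <= x -> (forall N, INR N <= m N) ->
  Un_cv (fun N => Rpower (m N) x * Bf x (m N)) (Gam x).
Proof.
  intros Hx Hm e He. destruct (P3 x Hx e He) as [M0 [HM0 H]].
  destruct (INR_unbounded M0) as [N0 HN0]. exists N0. intros n Hn.
  unfold Rdist. apply H. apply Rle_trans with (INR n); auto.
  apply Rle_trans with (INR N0). lra. apply le_INR; lia.
Qed.

Lemma Rpower_inv u a : 0 < u -> Rpower (/ u) a = / Rpower u a.
Proof. intros. unfold Rpower. rewrite ln_Rinv by auto. rewrite <- exp_Ropp. f_equal; ring. Qed.

Theorem Beta_Gamma a b : 1 <= a -> 1 <= b -> Bf a b * Gam (a + b) = Gam a * Gam b.
Proof.
  intros Ha Hb.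
  set (u := fun N : nat => INR N + 1). set (w := fun N : nat => b + INR N).
  set (X := fun N => Rpower (u N) (a + b) * Bf (a + b) (u N)).
  set (Y := fun N => Rpower (w N) a * Bf a (w N)).
  set (Z := fun N => Rpower (u N) b * Bf b (u N)).
  set (r := fun N => 1 + a / (INR N + b)).
  set (q := fun N => Rpower (1 + (b - 1) / (INR N + 1)) a).
  assert (HX : Un_cv X (Gam (a + b))) by (apply P3_seq; [lra| intros; unfold u; lra]).
  assert (HY : Un_cv Y (Gam a)) by (apply P3_seq; [lra| intros; unfold w; lra]).
  assert (HZ : Un_cv Z (Gam b)) by (apply P3_seq; [lra| intros; unfold u; lra]).
  assert (Hr : Un_cv r 1).
  { assert (H0 := CV_plus (fun _ => 1) (fun N => a / (INR N + b)) 1 0 (cv_const 1) (cv_inv a b Hb)).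
    rewrite Rplus_0_r in H0. exact H0. }
  assert (Hq : Un_cv q 1).
  { assert (H1 : Un_cv (fun N => 1 + (b - 1) / (INR N + 1)) 1).
    { assert (H0 := CV_plus (fun _ => 1) (fun N => (b - 1) / (INR N + 1)) 1 0 (cv_const 1) (cv_inv (b - 1) 1 ltac:(lra))).
      rewrite Rplus_0_r in H0. exact H0. }
    assert (H2 := continuity_seq (fun t => Rpower t a) _ 1 (Rpower_cont 1 a ltac:(lra)) H1).
    unfold Rpower at 2 in H2. rewrite ln_1, Rmult_0_r, exp_0 in H2. exact H2. }
  assert (Heq : forall N, Bf a b * X N * r N * q N = Y N * Z N).
  { intros N. assert (HN := pos_INR N). unfold X, Y, Z, r, q, u, w.
    assert (Hrec := rec_id a b N Ha Hb).
    replace (1 + (b - 1) / (INR N + 1)) with ((b + INR N) * / (INR N + 1)) by (field; lra).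
    rewrite <- Rpower_mult_distr, Rpower_inv by (try apply Rinv_0_lt_compat; lra).
    rewrite Rpower_plus.
    assert (0 < Rpower (INR N + 1) a) by apply Rpower_pos.
    replace (1 + a / (INR N + b)) with ((a + b + INR N) / (b + INR N)) by (field; lra).
    apply Rmult_eq_reg_r with ((b + INR N) * Rpower (INR N + 1) a).
    2:{ apply Rgt_not_eq. apply Rmult_lt_0_compat; lra. }
    transitivity (Rpower (INR N + 1) a * Rpower (INR N + 1) b * Rpower (b + INR N) a *
                  (Bf a b * Bf (a + b) (INR N + 1) * (a + b + INR N))).
    field; lra. rewrite Hrec. field; lra. }
  assert (HL : Un_cv (fun N => Bf a b * X N * r N * q N) (Bf a b * Gam (a + b) * 1 * 1)).
  { apply CV_mult; [apply CV_mult; [apply CV_mult|]|]; auto.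
    intros e He; exists 0%nat; intros; unfold Rdist; rewrite Rminus_eq_0, Rabs_R0; auto. }
  assert (HR : Un_cv (fun N => Bf a b * X N * r N * q N) (Gam a * Gam b)).
  { intros e He. destruct (CV_mult _ _ _ _ HY HZ e He) as [N0 HN0]. exists N0.
    intros n Hn. rewrite Heq. apply HN0; auto. }
  assert (Hu := UL_sequence _ _ _ HL HR). lra.
Qed.


Lemma B32 : Bf (3/2) (3/2) = PI / 8.
Proof.
  unfold Bf.
  assert (HPI := PI_RGT_0).
  assert (H1 : forall x, Rmin 0 PI <= x <= Rmax 0 PI -> continuous (bi (3/2) (3/2)) ((fun y => (1 - cos y) / 2) x)).
  { intros; apply cont_c; apply bi_cont; lra. }
  assert (H2 : forall x, Rmin 0 PI <= x <= Rmax 0 PI -> is_derive (fun y => (1 - cos y) / 2) x ((fun y => sin y / 2) x) /\ continuous (fun y => sin y / 2) x).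
  { intros; split. auto_derive; auto. change (- (1 * - sin x) * / 2 = sin x / 2); field. apply (cont_c (fun y => sin y / 2)). cont. }
  assert (H := RInt_comp (V:=R_CompleteNormedModule) (bi (3/2) (3/2)) (fun y => (1 - cos y) / 2) (fun y => sin y / 2) 0 PI H1 H2).
  cbv beta in H.
  rewrite cos_0, cos_PI in H.
  replace ((1 - 1) / 2) with 0 in H by field. replace ((1 - -1) / 2) with 1 in H by field.
  rewrite <- H; clear H H1 H2.
  assert (E : @eq R (RInt (fun y => scal (sin y / 2) (bi (3/2) (3/2) ((1 - cos y) / 2))) 0 PI)
                    (RInt (fun y => sin y ^ 2 / 4) 0 PI)).
  { apply RInt_extR. intros y Hy. rewrite Rmin_left, Rmax_right in Hy by lra.
    unfold scal; simpl; unfold mult; simpl. unfold bi.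
    assert (Hs : 0 < sin y) by (apply sin_gt_0; lra).
    assert (Hsc := sin2_cos2 y). unfold Rsqr in Hsc.
    assert (Hc : -1 < cos y < 1) by (split; nra).
    replace (3/2 - 1) with (/ 2) by field.
    rewrite !P_pos by lra. rewrite !Rpower_sqrt by lra.
    rewrite <- sqrt_mult by lra.
    replace ((1 - cos y) / 2 * (1 - (1 - cos y) / 2)) with ((sin y / 2) ^ 2) by (field_simplify; nra).
    rewrite sqrt_pow2 by lra. field. }
  refine (eq_trans E _).
  rewrite (FTC_full (fun y => y / 8 - sin (2 * y) / 16)); try lra.
  - rewrite Rmult_0_r, sin_0. replace (2 * PI) with (2 * PI) by ring. rewrite sin_2PI. field.
  - intros; cont.
  - intros y Hy. apply (der_of (fun y => y / 8 - sin (2 * y) / 16) (fun y => sin y ^ 2 / 4)).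
    auto_derive; auto. rewrite cos_2a_sin. field.
Qed.

Lemma Gam_2 : Gam 2 = 1.
Proof.
  assert (H := Beta_Gamma 1 1 ltac:(lra) ltac:(lra)).
  rewrite Beta_one, Gam_1 in H by lra. replace (1 + 1) with 2 in H by ring. lra.
Qed.

Lemma Gam_3 : Gam 3 = 2.
Proof.
  assert (H := Beta_Gamma 1 2 ltac:(lra) ltac:(lra)).
  assert (H2 := Beta_rec 1 1 ltac:(lra) ltac:(lra)).
  rewrite Beta_one in H2 by lra. replace (1 + 1) with 2 in H2 by ring.
  rewrite Gam_1, Gam_2 in H. replace (1 + 2) with 3 in H by ring. nra.
Qed.

Lemma Gam_32 : Gam (3/2) = sqrt PI / 2.
Proof.
  assert (H := Beta_Gamma (3/2) (3/2) ltac:(lra) ltac:(lra)).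
  replace (3/2 + 3/2) with 3 in H by field. rewrite B32, Gam_3 in H.
  assert (Hp := Gam_pos (3/2) ltac:(lra)).
  assert (HPI := PI_RGT_0).
  rewrite <- (sqrt_pow2 (Gam (3/2))) by lra.
  replace (Gam (3/2) ^ 2) with (PI / 4) by (simpl; lra).
  rewrite sqrt_div_alt by lra. replace 4 with (2 ^ 2) by ring. rewrite sqrt_pow2 by lra. reflexivity.
Qed.

Lemma Gam_52 : Gam (5/2) = 3 * sqrt PI / 4.
Proof.
  assert (H := Beta_Gamma (3/2) 1 ltac:(lra) ltac:(lra)).
  rewrite Beta_one, Gam_1, Gam_32 in H by lra. replace (3/2 + 1) with (5/2) in H by field.
  apply Rmult_eq_reg_l with (/ (3/2)). rewrite H. field. apply Rinv_neq_0_compat; lra.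
Qed.

Lemma A_val n : 0 <= n -> Bf (n + 1) (3/2) = sqrt PI * Gam (n + 1) / (2 * Gam (n + 5/2)).
Proof.
  intros Hn. assert (H := Beta_Gamma (n + 1) (3/2) ltac:(lra) ltac:(lra)).
  replace (n + 1 + 3/2) with (n + 5/2) in H by field. rewrite Gam_32 in H.
  assert (Hp := Gam_pos (n + 5/2) ltac:(lra)).
  apply Rmult_eq_reg_r with (Gam (n + 5/2)); [|lra]. rewrite H. field. lra.
Qed.

Lemma B_val n : 0 <= n -> Bf (n + 1) (5/2) = 3 * sqrt PI * Gam (n + 1) / (4 * Gam (n + 7/2)).
Proof.
  intros Hn. assert (H := Beta_Gamma (n + 1) (5/2) ltac:(lra) ltac:(lra)).
  replace (n + 1 + 5/2) with (n + 7/2) in H by field. rewrite Gam_52 in H.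
  assert (Hp := Gam_pos (n + 7/2) ltac:(lra)).
  apply Rmult_eq_reg_r with (Gam (n + 7/2)); [|lra]. rewrite H. field. lra.
Qed.


Lemma lim_intro f D l x0 :
  (forall e, 0 < e -> exists a, 0 < a /\ forall x, D x -> Rabs (x - x0) < a -> Rabs (f x - l) < e) ->
  limit1_in f D l x0.
Proof.
  intros H e He. destruct (H e He) as [a [Ha H1]]. exists a; split; auto.
  intros x [Hx Hd]. simpl in *. unfold R_dist in *. auto.
Qed.

Lemma lim_elim f D l x0 : limit1_in f D l x0 ->
  forall e, 0 < e -> exists a, 0 < a /\ forall x, D x -> Rabs (x - x0) < a -> Rabs (f x - l) < e.
Proof.
  intros H e He. destruct (H e He) as [a [Ha H1]]. exists a; split; auto.
  intros x Hx Hd. apply (H1 x). split; auto.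
Qed.

Definition clamp x := if Rle_dec x 0 then 0 else if Rle_dec x 1 then x else 1.

Lemma clamp_in x : 0 <= clamp x <= 1.
Proof. unfold clamp. repeat match goal with |- context [Rle_dec ?a ?b] => destruct (Rle_dec a b) end; lra. Qed.

Lemma clamp_id x : 0 <= x <= 1 -> clamp x = x.
Proof. intros. unfold clamp. repeat match goal with |- context [Rle_dec ?a ?b] => destruct (Rle_dec a b) end; lra. Qed.

Lemma clamp_lip x y : Rabs (clamp y - clamp x) <= Rabs (y - x).
Proof.
  unfold clamp.
  repeat match goal with |- context [Rle_dec ?a ?b] => destruct (Rle_dec a b) end;
  unfold Rabs; repeat match goal with |- context [Rcase_abs ?a] => destruct (Rcase_abs a) end; lra.
Qed.

Lemma phic_cont (phi : R -> R) :
  (forall x, 0 <= x <= 1 -> limit1_in phi (fun y => 0 <= y <= 1) (phi x) x) ->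
  forall x, continuity_pt (fun t => phi (clamp t)) x.
Proof.
  intros Hc x. apply cont_eps. intros e He.
  destruct (lim_elim _ _ _ _ (Hc (clamp x) (clamp_in x)) e He) as [a [Ha H1]].
  exists a; split; auto. intros y Hy. apply H1. apply clamp_in.
  eapply Rle_lt_trans; [apply clamp_lip|auto].
Qed.

Lemma subst01 (f : R -> R) a b : a < b -> ex_RInt f a b ->
  ex_RInt (fun s => f (b - (b - a) * s)) 0 1 ->
  RInt f a b = (b - a) * RInt (fun s => f (b - (b - a) * s)) 0 1.
Proof.
  intros Hab Hf Hex.
  assert (Hf' : ex_RInt f ((a - b) * 0 + b) ((a - b) * 1 + b)).
  { replace ((a - b) * 0 + b) with b by ring. replace ((a - b) * 1 + b) with a by ring.
    apply ex_RInt_swap; auto. }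
  assert (H := RInt_comp_lin (V:=R_CompleteNormedModule) f (a - b) b 0 1 Hf').
  replace ((a - b) * 0 + b) with b in H by ring. replace ((a - b) * 1 + b) with a in H by ring.
  assert (H2 := opp_RInt_swap (V:=R_CompleteNormedModule) f a b Hf).
  rewrite <- H in H2.
  rewrite (RInt_extR (fun y => scal (a - b) (f ((a - b) * y + b))) (fun s => (a - b) * f (b - (b - a) * s))) in H2.
  2:{ intros. unfold scal; simpl; unfold mult; simpl. f_equal. f_equal. ring. }
  rewrite RInt_scalR in H2 by auto.
  assert (H3 : - RInt f a b = (a - b) * RInt (fun s => f (b - (b - a) * s)) 0 1) by exact H2.
  lra.
Qed.

Lemma phi_decomp (phi : R -> R) n x : 0 < x -> phi x = Rpower x n * (Rpower x (- n) * phi x).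
Proof.
  intros Hx. rewrite <- Rmult_assoc, <- Rpower_plus. replace (n + - n) with 0 by ring.
  rewrite Rpower_O by auto. ring.
Qed.

Lemma Rpower_dsn eps n s : 0 < eps -> 0 < s ->
  Rpower (eps / (1 + eps) * s) n = Rpower eps n * Rpower (1 + eps) (- n) * Rpower s n.
Proof.
  intros He Hs. unfold Rdiv. rewrite <- !Rpower_mult_distr; try (apply Rinv_0_lt_compat); try lra.
  rewrite Rpower_inv, Rpower_Ropp by lra. reflexivity.
  apply Rmult_lt_0_compat; auto; apply Rinv_0_lt_compat; lra.
Qed.

Lemma bi32 n s : 0 <= n -> 0 < s < 1 -> bi (n + 1) (3/2) s = Rpower s n * sqrt (1 - s).
Proof.
  intros Hn Hs. unfold bi. rewrite !P_pos by lra. replace (n + 1 - 1) with n by ring.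
  replace (3/2 - 1) with (/ 2) by field. rewrite Rpower_sqrt by lra. reflexivity.
Qed.

Lemma bi52 n s : 0 <= n -> 0 < s < 1 -> bi (n + 1) (5/2) s = Rpower s n * ((1 - s) * sqrt (1 - s)).
Proof.
  intros Hn Hs. unfold bi. rewrite !P_pos by lra. replace (n + 1 - 1) with n by ring.
  replace (5/2 - 1) with (1 + / 2) by field. rewrite Rpower_plus, Rpower_1, Rpower_sqrt by lra. reflexivity.
Qed.

Definition Hf (phi : R -> R) n x := Rpower x (- n) * phi x.

Definition Qr phi n eps s :=
  Hf phi n (eps / (1 + eps) * s) * Rpower (1 + eps) (- n) * (1 + eps * (1 - s)) ^ 2 *
  sqrt (2 + eps * (1 - s)) * bi (n + 1) (3/2) s.

Definition Qp phi n eps s :=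
  Hf phi n (eps / (1 + eps) * s) * Rpower (1 + eps) (- n) * (2 + eps * (1 - s)) *
  sqrt (2 + eps * (1 - s)) * bi (n + 1) (5/2) s.

Lemma geo1 E0 V s : 0 < E0 -> 0 < V < E0 ->
  1 - (E0 - (E0 - V) * s) / E0 = (E0 / V - 1) / (1 + (E0 / V - 1)) * s.
Proof. intros. field. split; lra. Qed.

Lemma geo2 E0 V s : 0 < E0 -> 0 < V < E0 ->
  (E0 - (E0 - V) * s) / V = 1 + (E0 / V - 1) * (1 - s).
Proof. intros. field. lra. Qed.

Lemma sqrt_w eps s : 0 < eps -> 0 < s < 1 ->
  sqrt ((1 + eps * (1 - s)) ^ 2 - 1) = sqrt eps * sqrt (1 - s) * sqrt (2 + eps * (1 - s)).
Proof.
  intros. replace ((1 + eps * (1 - s)) ^ 2 - 1) with (eps * ((1 - s) * (2 + eps * (1 - s)))) by ring.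
  assert (0 <= eps * (1 - s)) by (apply Rmult_le_pos; lra). assert (0 <= (1 - s) * (2 + eps * (1 - s))) by (apply Rmult_le_pos; lra).
  rewrite (sqrt_mult eps), (sqrt_mult (1 - s)) by lra. ring.
Qed.

Lemma eps_pos E0 V : 0 < E0 -> 0 < V < E0 -> 0 < E0 / V - 1.
Proof.
  intros. assert (1 < E0 / V). { apply Rmult_lt_reg_l with V; [lra|]. field_simplify; lra. } lra.
Qed.

Lemma rho_pt (phi : R -> R) E0 n V s : 0 < E0 -> 0 < V < E0 -> 0 <= n -> 0 < s < 1 ->
  phi (1 - (E0 - (E0 - V) * s) / E0) * (E0 - (E0 - V) * s) ^ 2 *
    sqrt (((E0 - (E0 - V) * s) / V) ^ 2 - 1)
  = V ^ 2 * Rpower (E0 / V - 1) n * sqrt (E0 / V - 1) * Qr phi n (E0 / V - 1) s.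
Proof.
  intros HE HV Hn Hs. assert (He := eps_pos E0 V HE HV).
  set (eps := E0 / V - 1) in *.
  assert (HEq : E0 - (E0 - V) * s = V * (1 + eps * (1 - s))) by (unfold eps; field; lra).
  rewrite geo1, geo2 by auto. fold eps. rewrite HEq.
  rewrite sqrt_w by auto.
  assert (Hd : 0 < eps / (1 + eps) * s) by (apply Rmult_lt_0_compat; [apply Rdiv_lt_0_compat|]; lra).
  rewrite (phi_decomp phi n _ Hd). rewrite Rpower_dsn by lra.
  unfold Qr, Hf. rewrite bi32 by auto. ring.
Qed.

Lemma p_pt (phi : R -> R) E0 n V s : 0 < E0 -> 0 < V < E0 -> 0 <= n -> 0 < s < 1 ->
  phi (1 - (E0 - (E0 - V) * s) / E0) * (((E0 - (E0 - V) * s) / V) ^ 2 - 1) *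
    sqrt (((E0 - (E0 - V) * s) / V) ^ 2 - 1)
  = Rpower (E0 / V - 1) n * (E0 / V - 1) * sqrt (E0 / V - 1) * Qp phi n (E0 / V - 1) s.
Proof.
  intros HE HV Hn Hs. assert (He := eps_pos E0 V HE HV).
  set (eps := E0 / V - 1) in *.
  rewrite geo1, geo2 by auto. fold eps.
  rewrite sqrt_w by auto.
  assert (Hd : 0 < eps / (1 + eps) * s) by (apply Rmult_lt_0_compat; [apply Rdiv_lt_0_compat|]; lra).
  rewrite (phi_decomp phi n _ Hd). rewrite Rpower_dsn by lra.
  unfold Qp, Hf. rewrite bi52 by auto. ring.
Qed.

Lemma ex_RInt_scalR (f : R -> R) a b k : ex_RInt f a b -> ex_RInt (fun t => k * f t) a b.
Proof. intros H. exact (ex_RInt_scal (V:=R_CompleteNormedModule) f a b k H). Qed.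

Lemma div_in01 E E0 : 0 < E < E0 -> 0 < E / E0 < 1.
Proof.
  intros H. split. apply Rdiv_lt_0_compat; lra.
  apply Rmult_lt_reg_r with E0; [lra|]. field_simplify; lra.
Qed.

Lemma sub_in E0 V s : 0 < V < E0 -> 0 < s < 1 -> V < E0 - (E0 - V) * s < E0.
Proof. intros. split; nra. Qed.

Section Formulas.
Variables (phi : R -> R) (E0 n : R).
Hypothesis hE0 : 0 < E0.
Hypothesis hn : 0 <= n.
Hypothesis hcont : forall x, 0 <= x <= 1 -> limit1_in phi (fun y => 0 <= y <= 1) (phi x) x.

Lemma phic_E y : continuity_pt (fun E => phi (clamp (1 - E / E0))) y.
Proof.
  apply (cc_comp (fun E => 1 - E / E0) (fun t => phi (clamp t))). cont. apply phic_cont; auto.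
Qed.

Lemma clamp_E V E : 0 < V -> V <= E <= E0 -> clamp (1 - E / E0) = 1 - E / E0.
Proof.
  intros HV HE. apply clamp_id. destruct HE as [H1 H2].
  assert (0 < E / E0) by (apply Rdiv_lt_0_compat; lra).
  assert (E / E0 <= 1) by (apply Rmult_le_reg_r with E0; [lra|]; field_simplify; lra). lra.
Qed.

Lemma rho_formula V : 0 < V < E0 ->
  ex_RInt (Qr phi n (E0 / V - 1)) 0 1 /\
  rho phi E0 V = 4 * PI * (E0 / V - 1) * Rpower (E0 / V - 1) n * sqrt (E0 / V - 1) *
                 RInt (Qr phi n (E0 / V - 1)) 0 1.
Proof.
  intros HV. assert (He := eps_pos E0 V hE0 HV).
  set (f := fun E => phi (1 - E / E0) * E ^ 2 * sqrt ((E / V) ^ 2 - 1)).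
  set (fc := fun E => phi (clamp (1 - E / E0)) * E ^ 2 * sqrt ((E / V) ^ 2 - 1)).
  assert (Hfc : forall y, continuity_pt fc y).
  { intros y. unfold fc. apply cc_mul; [apply cc_mul; [apply phic_E; auto|cont]|cont]. }
  assert (exf : ex_RInt f V E0).
  { apply (ex_RInt_extR fc). intros E HE. rewrite Rmin_left, Rmax_right in HE by lra.
    unfold fc, f. rewrite clamp_E with V E; auto; lra.
    apply exRInt_cont; auto. }
  assert (exg : ex_RInt (fun s => f (E0 - (E0 - V) * s)) 0 1).
  { apply (ex_RInt_extR (fun s => fc (E0 - (E0 - V) * s))). intros s Hs. rewrite Rmin_left, Rmax_right in Hs by lra.
    assert (Hsub := sub_in E0 V s HV Hs).
    unfold fc, f. rewrite clamp_E with V (E0 - (E0 - V) * s); auto; lra.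
    apply exRInt_cont; intros. apply (cc_comp (fun s => E0 - (E0 - V) * s) fc); auto. cont. }
  set (c := V ^ 2 * Rpower (E0 / V - 1) n * sqrt (E0 / V - 1)).
  assert (Hc : 0 < c).
  { unfold c. apply Rmult_lt_0_compat. apply Rmult_lt_0_compat. nra. apply Rpower_pos. apply sqrt_lt_R0; auto. }
  assert (Hpt : forall s, Rmin 0 1 < s < Rmax 0 1 -> f (E0 - (E0 - V) * s) = c * Qr phi n (E0 / V - 1) s).
  { intros s Hs. rewrite Rmin_left, Rmax_right in Hs by lra. unfold f, c. apply rho_pt; auto. }
  assert (exQ : ex_RInt (Qr phi n (E0 / V - 1)) 0 1).
  { apply (ex_RInt_extR (fun s => / c * f (E0 - (E0 - V) * s))).
    intros s Hs. rewrite Hpt by auto. field. lra. apply ex_RInt_scalR; auto. }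
  split; auto.
  unfold rho. fold f. rewrite DefsRInt_eq by auto. rewrite subst01; [| lra | exact exf | exact exg].
  rewrite (RInt_extR _ (fun s => c * Qr phi n (E0 / V - 1) s)) by auto.
  rewrite RInt_scalR by auto. unfold c. field. lra.
Qed.

Lemma p_formula V : 0 < V < E0 ->
  ex_RInt (Qp phi n (E0 / V - 1)) 0 1 /\
  pres phi E0 V = 4 * PI / 3 * (E0 / V - 1) * Rpower (E0 / V - 1) n * (E0 / V - 1) * sqrt (E0 / V - 1) *
                 RInt (Qp phi n (E0 / V - 1)) 0 1.
Proof.
  intros HV. assert (He := eps_pos E0 V hE0 HV).
  set (f := fun E => phi (1 - E / E0) * ((E / V) ^ 2 - 1) * sqrt ((E / V) ^ 2 - 1)).
  set (fc := fun E => phi (clamp (1 - E / E0)) * ((E / V) ^ 2 - 1) * sqrt ((E / V) ^ 2 - 1)).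
  assert (Hfc : forall y, continuity_pt fc y).
  { intros y. unfold fc. apply cc_mul; [apply cc_mul; [apply phic_E; auto|cont]|cont]. }
  assert (exf : ex_RInt f V E0).
  { apply (ex_RInt_extR fc). intros E HE. rewrite Rmin_left, Rmax_right in HE by lra.
    unfold fc, f. rewrite clamp_E with V E; auto; lra.
    apply exRInt_cont; auto. }
  assert (exg : ex_RInt (fun s => f (E0 - (E0 - V) * s)) 0 1).
  { apply (ex_RInt_extR (fun s => fc (E0 - (E0 - V) * s))). intros s Hs. rewrite Rmin_left, Rmax_right in Hs by lra.
    assert (Hsub := sub_in E0 V s HV Hs).
    unfold fc, f. rewrite clamp_E with V (E0 - (E0 - V) * s); auto; lra.
    apply exRInt_cont; intros. apply (cc_comp (fun s => E0 - (E0 - V) * s) fc); auto. cont. }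
  set (c := Rpower (E0 / V - 1) n * (E0 / V - 1) * sqrt (E0 / V - 1)).
  assert (Hc : 0 < c).
  { unfold c. apply Rmult_lt_0_compat. apply Rmult_lt_0_compat. apply Rpower_pos. auto. apply sqrt_lt_R0; auto. }
  assert (Hpt : forall s, Rmin 0 1 < s < Rmax 0 1 -> f (E0 - (E0 - V) * s) = c * Qp phi n (E0 / V - 1) s).
  { intros s Hs. rewrite Rmin_left, Rmax_right in Hs by lra. unfold f, c. apply p_pt; auto. }
  assert (exQ : ex_RInt (Qp phi n (E0 / V - 1)) 0 1).
  { apply (ex_RInt_extR (fun s => / c * f (E0 - (E0 - V) * s))).
    intros s Hs. rewrite Hpt by auto. field. lra. apply ex_RInt_scalR; auto. }
  split; auto.
  unfold pres. fold f. rewrite DefsRInt_eq by auto. rewrite subst01; [| lra | exact exf | exact exg].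
  rewrite (RInt_extR _ (fun s => c * Qp phi n (E0 / V - 1) s)) by auto.
  rewrite RInt_scalR by auto. unfold c. field. lra.
Qed.

End Formulas.


Lemma rp_bounds eps n : 0 < eps -> 0 <= n -> 1 - n * eps <= Rpower (1 + eps) (- n) <= 1.
Proof.
  intros He Hn. unfold Rpower.
  assert (Hl0 : 0 <= ln (1 + eps)) by (rewrite <- ln_1; apply ln_le; lra).
  assert (Hl1 : ln (1 + eps) <= eps) by (generalize (ln_le_m1 (1 + eps)); intros H; specialize (H ltac:(lra)); lra).
  split.
  - assert (n * ln (1 + eps) <= n * eps) by (apply Rmult_le_compat_l; lra).
    generalize (exp_ineq1_le (- n * ln (1 + eps))). intros. 
    replace (- n * ln (1 + eps)) with (- (n * ln (1 + eps))) in * by ring. lra.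
  - assert (0 <= n * ln (1 + eps)) by (apply Rmult_le_pos; lra). apply Rle_trans with (exp 0); [apply exp_le; lra | rewrite exp_0; lra].
Qed.

Lemma prod4 a1 a2 a3 a4 b1 b2 b3 b4 : 0 <= a1 <= b1 -> 0 <= a2 <= b2 -> 0 <= a3 <= b3 -> 0 <= a4 <= b4 ->
  a1 * a2 * a3 * a4 <= b1 * b2 * b3 * b4.
Proof.
  intros. apply Rmult_le_compat; try apply Rmult_le_pos; try apply Rmult_le_pos; try lra.
  apply Rmult_le_compat; try apply Rmult_le_pos; try lra.
  apply Rmult_le_compat; lra.
Qed.

Lemma sqrt2w_bounds eps w : 0 <= w <= eps -> sqrt 2 <= sqrt (2 + w) <= sqrt 2 * (1 + eps).
Proof.
  intros Hw. split. apply sqrt_le_1_alt; lra.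
  rewrite <- (sqrt_pow2 (1 + eps)) by lra. rewrite <- sqrt_mult by nra.
  apply sqrt_le_1_alt. nra.
Qed.

Lemma bi_nonneg x y s : 0 <= bi x y s.
Proof. unfold bi. apply Rmult_le_pos; apply P_nonneg. Qed.

Lemma Qr_bounds phi n C eta eps s : 0 <= n -> 0 < eps <= 1 -> n * eps <= 1 -> 0 < eta < C -> 0 < s < 1 ->
  Rabs (Hf phi n (eps / (1 + eps) * s) - C) < eta ->
  sqrt 2 * ((C - eta) * (1 - n * eps)) * bi (n + 1) (3/2) s <= Qr phi n eps s <=
  sqrt 2 * ((C + eta) * (1 + eps) ^ 3) * bi (n + 1) (3/2) s.
Proof.
  intros Hn He Hne Hc Hs HH. apply abs_lt_b in HH.
  assert (Hrp := rp_bounds eps n ltac:(lra) Hn).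
  assert (Hw : 0 <= eps * (1 - s) <= eps) by (split; nra).
  assert (Hsq := sqrt2w_bounds eps _ Hw).
  assert (Hs2 : 0 < sqrt 2) by (apply sqrt_lt_R0; lra).
  assert (Hb := bi_nonneg (n + 1) (3/2) s).
  unfold Qr. split.
  - apply Rmult_le_compat_r; auto.
    replace (sqrt 2 * ((C - eta) * (1 - n * eps))) with ((C - eta) * (1 - n * eps) * 1 * sqrt 2) by ring.
    apply prod4; split; try lra; nra.
  - apply Rmult_le_compat_r; auto.
    replace (sqrt 2 * ((C + eta) * (1 + eps) ^ 3)) with ((C + eta) * 1 * (1 + eps) ^ 2 * (sqrt 2 * (1 + eps))) by ring.
    apply prod4; split; try lra; try nra; try (apply pow_le; nra); try (apply pow_incr; nra); try (apply Rle_trans with (sqrt 2); lra).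
Qed.

Lemma Qp_bounds phi n C eta eps s : 0 <= n -> 0 < eps <= 1 -> n * eps <= 1 -> 0 < eta < C -> 0 < s < 1 ->
  Rabs (Hf phi n (eps / (1 + eps) * s) - C) < eta ->
  2 * sqrt 2 * ((C - eta) * (1 - n * eps)) * bi (n + 1) (5/2) s <= Qp phi n eps s <=
  2 * sqrt 2 * ((C + eta) * (1 + eps) ^ 3) * bi (n + 1) (5/2) s.
Proof.
  intros Hn He Hne Hc Hs HH. apply abs_lt_b in HH.
  assert (Hrp := rp_bounds eps n ltac:(lra) Hn).
  assert (Hw : 0 <= eps * (1 - s) <= eps) by (split; nra).
  assert (Hsq := sqrt2w_bounds eps _ Hw).
  assert (Hs2 : 0 < sqrt 2) by (apply sqrt_lt_R0; lra).
  assert (Hb := bi_nonneg (n + 1) (5/2) s).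
  unfold Qp. split.
  - apply Rmult_le_compat_r; auto.
    replace (2 * sqrt 2 * ((C - eta) * (1 - n * eps))) with ((C - eta) * (1 - n * eps) * 2 * sqrt 2) by ring.
    apply prod4; split; try lra; nra.
  - apply Rmult_le_compat_r; auto.
    apply Rle_trans with ((C + eta) * 1 * (2 * (1 + eps)) * (sqrt 2 * (1 + eps))).
    apply prod4; split; try lra; try nra; try (apply Rle_trans with (sqrt 2); lra).
    replace ((C + eta) * 1 * (2 * (1 + eps)) * (sqrt 2 * (1 + eps))) with (2 * sqrt 2 * ((C + eta) * (1 + eps) ^ 2)) by ring.
    apply Rmult_le_compat_l. lra. apply Rmult_le_compat_l. lra. simpl. nra.
Qed.


Lemma final_arith e n eps r : 0 < e <= 1 -> 0 <= n -> 0 < eps <= e / (56 * (n + 1)) ->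
  (1 - e / 4) * (1 - n * eps) <= r <= (1 + e / 4) * (1 + eps) ^ 3 -> Rabs (r - 1) < e.
Proof.
  intros He Hn Heps Hr.
  assert (H1 : eps * (56 * (n + 1)) <= e).
  { destruct Heps as [_ H]. apply Rmult_le_reg_r with (/ (56 * (n + 1))).
    apply Rinv_0_lt_compat; lra. rewrite Rmult_assoc, Rinv_r by lra. lra. }
  assert (Hne : n * eps <= e / 56) by nra.
  assert (He1 : eps <= e / 56) by nra.
  assert (Hc : (1 + eps) ^ 3 <= 1 + 7 * eps) by (simpl; nra).
  assert (Hup : (1 + e / 4) * (1 + eps) ^ 3 <= (1 + e / 4) * (1 + 7 * eps)) by (apply Rmult_le_compat_l; lra).
  assert (Hnn : 0 <= e / 4 * (n * eps)) by (apply Rmult_le_pos; [lra| apply Rmult_le_pos; lra]).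
  assert (Hlo : (1 - e / 4) * (1 - n * eps) = 1 - e / 4 - n * eps + e / 4 * (n * eps)) by field.
  assert (Hee : e * eps <= eps) by nra.
  assert (Hup2 : (1 + e / 4) * (1 + 7 * eps) = 1 + 7 * eps + e / 4 + 7 / 4 * (e * eps)) by field.
  apply Rabs_def1; lra.
Qed.

Lemma Rpower_32 eps n k : 0 < eps -> Rpower eps (n + (k + / 2)) = Rpower eps n * Rpower eps k * sqrt eps.
Proof. intros. rewrite !Rpower_plus, Rpower_sqrt by auto. ring. Qed.

Lemma A_pos n : 0 <= n -> 0 < Bf (n + 1) (3/2).
Proof.
  intros. rewrite A_val by auto.
  assert (0 < sqrt PI) by (apply sqrt_lt_R0; apply PI_RGT_0).
  assert (0 < Gam (n + 1)) by (apply Gam_pos; lra). assert (0 < Gam (n + 5/2)) by (apply Gam_pos; lra).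
  apply Rdiv_lt_0_compat; nra.
Qed.

Lemma B_pos n : 0 <= n -> 0 < Bf (n + 1) (5/2).
Proof.
  intros. rewrite B_val by auto.
  assert (0 < sqrt PI) by (apply sqrt_lt_R0; apply PI_RGT_0).
  assert (0 < Gam (n + 1)) by (apply Gam_pos; lra). assert (0 < Gam (n + 7/2)) by (apply Gam_pos; lra).
  apply Rdiv_lt_0_compat; nra.
Qed.

Section Asym.
Variables (phi : R -> R) (E0 n C : R).
Hypothesis hE0 : 0 < E0.
Hypothesis hn : 0 <= n.
Hypothesis hC : 0 < C.
Hypothesis hcont : forall x, 0 <= x <= 1 -> limit1_in phi (fun y => 0 <= y <= 1) (phi x) x.
Hypothesis hlim : limit1_in (fun x => Rpower x (- n) * phi x) (fun x => 0 < x) C 0.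

Lemma setup e : 0 < e <= 1 -> exists al, 0 < al /\ forall V, 0 < V < E0 -> Rabs (V - E0) < al ->
  0 < E0 / V - 1 <= e / (56 * (n + 1)) /\
  forall s, 0 < s < 1 -> Rabs (Hf phi n ((E0 / V - 1) / (1 + (E0 / V - 1)) * s) - C) < C * e / 4.
Proof.
  intros He. assert (Heta : 0 < C * e / 4) by nra.
  destruct (lim_elim _ _ _ _ hlim _ Heta) as [a0 [Ha0 Hl]].
  set (e0 := e / (56 * (n + 1))).
  assert (He0 : 0 < e0) by (unfold e0; apply Rdiv_lt_0_compat; lra).
  exists (Rmin (E0 / 2) (Rmin (E0 * e0 / 2) (E0 * a0))). split.
  { repeat apply Rmin_glb_lt; nra. }
  intros V HV Hd.
  assert (Hd1 : E0 - V < E0 / 2) by (generalize (Rmin_l (E0/2) (Rmin (E0 * e0 / 2) (E0 * a0))); rewrite Rabs_left in Hd; lra).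
  assert (Hd2 : E0 - V < E0 * e0 / 2) by (generalize (Rmin_r (E0/2) (Rmin (E0 * e0 / 2) (E0 * a0))), (Rmin_l (E0 * e0 / 2) (E0 * a0)); rewrite Rabs_left in Hd; lra).
  assert (Hd3 : E0 - V < E0 * a0) by (generalize (Rmin_r (E0/2) (Rmin (E0 * e0 / 2) (E0 * a0))), (Rmin_r (E0 * e0 / 2) (E0 * a0)); rewrite Rabs_left in Hd; lra).
  assert (Hep := eps_pos E0 V hE0 HV).
  split. split; auto.
  - replace (E0 / V - 1) with ((E0 - V) / V) by (field; lra).
    apply Rmult_le_reg_r with V; [lra|]. replace ((E0 - V) / V * V) with (E0 - V) by (field; lra).
    fold e0. nra.
  - intros s Hs. unfold Hf. apply Hl.
    + replace ((E0 / V - 1) / (1 + (E0 / V - 1)) * s) with ((E0 - V) / E0 * s) by (field; lra).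
      apply Rmult_lt_0_compat; [apply Rdiv_lt_0_compat|]; lra.
    + replace ((E0 / V - 1) / (1 + (E0 / V - 1)) * s) with ((E0 - V) / E0 * s) by (field; lra).
      rewrite Rminus_0_r, Rabs_pos_eq.
      apply Rle_lt_trans with ((E0 - V) / E0). assert (0 < (E0 - V) / E0) by (apply Rdiv_lt_0_compat; lra). nra.
      apply Rmult_lt_reg_r with E0; [lra|]. field_simplify; lra.
      apply Rmult_le_pos; [|lra]. left; apply Rdiv_lt_0_compat; lra.
Qed.

Lemma rho_asym :
  limit1_in (fun V => rho phi E0 V / (4 * sqrt 2 * PI * C * Bf (n + 1) (3/2) * Rpower (E0 / V - 1) (n + 3 / 2)))
    (fun V => 0 < V < E0) 1 E0.
Proof.
  apply lim_intro. intros e0 He0. set (e := Rmin e0 1).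
  assert (He : 0 < e <= 1) by (unfold e; split; [apply Rmin_glb_lt; lra| apply Rmin_r]).
  destruct (setup e He) as [al [Hal Hset]]. exists al; split; auto.
  intros V HV Hd. destruct (Hset V HV Hd) as [Heps HH].
  set (eps := E0 / V - 1) in *.
  destruct (rho_formula phi E0 n hE0 hn hcont V HV) as [exQ Hrho]. fold eps in exQ, Hrho.
  set (I := RInt (Qr phi n eps) 0 1 : R) in *.
  set (A := Bf (n + 1) (3/2)).
  assert (HA : 0 < A) by (apply A_pos; auto).
  assert (Hs2 : 0 < sqrt 2) by (apply sqrt_lt_R0; lra).
  assert (Hne : n * eps <= 1).
  { assert (eps * (56 * (n + 1)) <= e) by (destruct Heps as [_ H0]; apply Rmult_le_reg_r with (/ (56 * (n + 1)));
      [apply Rinv_0_lt_compat; lra| rewrite Rmult_assoc, Rinv_r by lra; lra]). nra. }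
  assert (Hle1 : eps <= 1).
  { assert (eps * (56 * (n + 1)) <= e) by (destruct Heps as [_ H0]; apply Rmult_le_reg_r with (/ (56 * (n + 1)));
      [apply Rinv_0_lt_compat; lra| rewrite Rmult_assoc, Rinv_r by lra; lra]). nra. }
  assert (Heta : 0 < C * e / 4 < C) by (split; nra).
  set (L := sqrt 2 * ((C - C * e / 4) * (1 - n * eps))).
  set (U := sqrt 2 * ((C + C * e / 4) * (1 + eps) ^ 3)).
  assert (exb : ex_RInt (bi (n + 1) (3/2)) 0 1) by (apply exB; lra).
  assert (HIlo : L * A <= I).
  { unfold A, Bf, I. rewrite <- RInt_scalR by auto. apply RInt_le; try lra.
    apply ex_RInt_scalR; auto. auto.
    intros s Hs. apply (Qr_bounds phi n C (C * e / 4) eps s); auto; lra. }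
  assert (HIup : I <= U * A).
  { unfold A, Bf, I. rewrite <- RInt_scalR by auto. apply RInt_le; try lra.
    auto. apply ex_RInt_scalR; auto.
    intros s Hs. apply (Qr_bounds phi n C (C * e / 4) eps s); auto; lra. }
  assert (Hratio : rho phi E0 V / (4 * sqrt 2 * PI * C * A * Rpower eps (n + 3 / 2)) = I / (sqrt 2 * C * A)).
  { rewrite Hrho. replace (3 / 2) with (1 + / 2) by field. rewrite Rpower_32, Rpower_1 by lra.
    assert (0 < Rpower eps n) by apply Rpower_pos. assert (0 < sqrt eps) by (apply sqrt_lt_R0; lra).
    assert (HPI := PI_RGT_0). field. repeat split; lra. }
  rewrite Hratio.
  apply Rlt_le_trans with e; [|apply Rmin_l].
  apply (final_arith e n eps); auto.
  assert (Hk : 0 < sqrt 2 * C * A) by (apply Rmult_lt_0_compat; [apply Rmult_lt_0_compat|]; lra).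
  split.
  - apply Rmult_le_reg_r with (sqrt 2 * C * A); auto.
    replace (I / (sqrt 2 * C * A) * (sqrt 2 * C * A)) with I by (field; lra).
    unfold L in HIlo. replace ((1 - e / 4) * (1 - n * eps) * (sqrt 2 * C * A)) with
      (sqrt 2 * ((C - C * e / 4) * (1 - n * eps)) * A) by (field; lra). lra.
  - apply Rmult_le_reg_r with (sqrt 2 * C * A); auto.
    replace (I / (sqrt 2 * C * A) * (sqrt 2 * C * A)) with I by (field; lra).
    unfold U in HIup. replace ((1 + e / 4) * (1 + eps) ^ 3 * (sqrt 2 * C * A)) with
      (sqrt 2 * ((C + C * e / 4) * (1 + eps) ^ 3) * A) by (field; lra). lra.
Qed.

Lemma p_asym :
  limit1_in (fun V => pres phi E0 V / (Rpower 2 (3 / 2) * (4 / 3) * PI * C * Bf (n + 1) (5/2) * Rpower (E0 / V - 1) (n + 5 / 2)))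
    (fun V => 0 < V < E0) 1 E0.
Proof.
  apply lim_intro. intros e0 He0. set (e := Rmin e0 1).
  assert (He : 0 < e <= 1) by (unfold e; split; [apply Rmin_glb_lt; lra| apply Rmin_r]).
  destruct (setup e He) as [al [Hal Hset]]. exists al; split; auto.
  intros V HV Hd. destruct (Hset V HV Hd) as [Heps HH].
  set (eps := E0 / V - 1) in *.
  destruct (p_formula phi E0 n hE0 hn hcont V HV) as [exQ Hrho]. fold eps in exQ, Hrho.
  set (I := RInt (Qp phi n eps) 0 1 : R) in *.
  set (A := Bf (n + 1) (5/2)).
  assert (HA : 0 < A) by (apply B_pos; auto).
  assert (Hs2 : 0 < sqrt 2) by (apply sqrt_lt_R0; lra).
  assert (Hne : n * eps <= 1).
  { assert (eps * (56 * (n + 1)) <= e) by (destruct Heps as [_ H0]; apply Rmult_le_reg_r with (/ (56 * (n + 1)));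
      [apply Rinv_0_lt_compat; lra| rewrite Rmult_assoc, Rinv_r by lra; lra]). nra. }
  assert (Hle1 : eps <= 1).
  { assert (eps * (56 * (n + 1)) <= e) by (destruct Heps as [_ H0]; apply Rmult_le_reg_r with (/ (56 * (n + 1)));
      [apply Rinv_0_lt_compat; lra| rewrite Rmult_assoc, Rinv_r by lra; lra]). nra. }
  assert (Heta : 0 < C * e / 4 < C) by (split; nra).
  set (L := 2 * sqrt 2 * ((C - C * e / 4) * (1 - n * eps))).
  set (U := 2 * sqrt 2 * ((C + C * e / 4) * (1 + eps) ^ 3)).
  assert (exb : ex_RInt (bi (n + 1) (5/2)) 0 1) by (apply exB; lra).
  assert (HIlo : L * A <= I).
  { unfold A, Bf, I. rewrite <- RInt_scalR by auto. apply RInt_le; try lra.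
    apply ex_RInt_scalR; auto. auto.
    intros s Hs. apply (Qp_bounds phi n C (C * e / 4) eps s); auto; lra. }
  assert (HIup : I <= U * A).
  { unfold A, Bf, I. rewrite <- RInt_scalR by auto. apply RInt_le; try lra.
    auto. apply ex_RInt_scalR; auto.
    intros s Hs. apply (Qp_bounds phi n C (C * e / 4) eps s); auto; lra. }
  assert (Hratio : pres phi E0 V / (Rpower 2 (3 / 2) * (4 / 3) * PI * C * A * Rpower eps (n + 5 / 2)) = I / (2 * sqrt 2 * C * A)).
  { rewrite Hrho. replace (5 / 2) with ((1 + 1) + / 2) by field. rewrite Rpower_32 by lra.
    rewrite Rpower_plus, Rpower_1 by lra.
    replace (3 / 2) with (1 + / 2) by field. rewrite Rpower_plus, Rpower_1, Rpower_sqrt by lra.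
    assert (0 < Rpower eps n) by apply Rpower_pos. assert (0 < sqrt eps) by (apply sqrt_lt_R0; lra).
    assert (HPI := PI_RGT_0). field. repeat split; lra. }
  rewrite Hratio.
  apply Rlt_le_trans with e; [|apply Rmin_l].
  apply (final_arith e n eps); auto.
  assert (Hk : 0 < 2 * sqrt 2 * C * A) by (apply Rmult_lt_0_compat; [apply Rmult_lt_0_compat|]; lra).
  split.
  - apply Rmult_le_reg_r with (2 * sqrt 2 * C * A); auto.
    replace (I / (2 * sqrt 2 * C * A) * (2 * sqrt 2 * C * A)) with I by (field; lra).
    unfold L in HIlo. replace ((1 - e / 4) * (1 - n * eps) * (2 * sqrt 2 * C * A)) with
      (2 * sqrt 2 * ((C - C * e / 4) * (1 - n * eps)) * A) by (field; lra). lra.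
  - apply Rmult_le_reg_r with (2 * sqrt 2 * C * A); auto.
    replace (I / (2 * sqrt 2 * C * A) * (2 * sqrt 2 * C * A)) with I by (field; lra).
    unfold U in HIup. replace ((1 + e / 4) * (1 + eps) ^ 3 * (2 * sqrt 2 * C * A)) with
      (2 * sqrt 2 * ((C + C * e / 4) * (1 + eps) ^ 3) * A) by (field; lra). lra.
Qed.

End Asym.


Lemma lim_comp_cont f h D l x0 : limit1_in f D l x0 -> continuity_pt h l ->
  limit1_in (fun x => h (f x)) D (h l) x0.
Proof.
  intros Hf Hh. apply lim_intro. intros e He.
  destruct (cont_eps_inv _ _ Hh e He) as [d [Hd H1]].
  destruct (lim_elim _ _ _ _ Hf d Hd) as [a [Ha H2]].
  exists a; split; auto.
Qed.

Lemma lim_ext_loc f g D l x0 r : 0 < r -> (forall x, D x -> Rabs (x - x0) < r -> f x = g x) ->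
  limit1_in g D l x0 -> limit1_in f D l x0.
Proof.
  intros Hr Hfg Hg. apply lim_intro. intros e He.
  destruct (lim_elim _ _ _ _ Hg e He) as [a [Ha H1]].
  exists (Rmin a r); split. apply Rmin_glb_lt; auto.
  intros x Hx Hd. rewrite Hfg; auto. apply H1; auto.
  eapply Rlt_le_trans; [apply Hd|apply Rmin_l].
  eapply Rlt_le_trans; [apply Hd|apply Rmin_r].
Qed.

Lemma alg3 rho p a b E1 E2 K g : 0 < a -> 0 < b -> 0 < E1 -> 0 < E2 -> 0 < rho / (a * E1) ->
  Rpower E1 g = E2 -> K * Rpower a g = b ->
  p / (K * Rpower rho g) = p / (b * E2) * / Rpower (rho / (a * E1)) g.
Proof.
  intros Ha Hb HE1 HE2 Hr HE Hk.
  assert (Hrho : rho = rho / (a * E1) * a * E1) by (field; lra).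
  assert (Hr' : 0 < rho) by (rewrite Hrho; apply Rmult_lt_0_compat; [apply Rmult_lt_0_compat|]; auto).
  set (r1 := rho / (a * E1)) in *.
  rewrite Hrho. rewrite <- (Rpower_mult_distr (r1 * a) E1) by (try apply Rmult_lt_0_compat; auto).
  rewrite <- (Rpower_mult_distr r1 a) by auto.
  rewrite HE. replace (K * (Rpower r1 g * Rpower a g * E2)) with (Rpower r1 g * (K * Rpower a g) * E2) by ring.
  rewrite Hk. assert (0 < Rpower r1 g) by apply Rpower_pos. field. repeat split; lra.
Qed.

Theorem mainTheorem9 (E0 n C : R) (phi : R -> R)
  (G1 G52 G72 : R)
  (hE0 : 0 < E0) (hn : 0 <= n) (hC : 0 < C)
  (hpos : forall x, x <= 1 -> 0 <= phi x)
  (hcont : forall x, 0 <= x <= 1 -> limit1_in phi (fun y => 0 <= y <= 1) (phi x) x)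
  (hneg : forall x, x < 0 -> phi x = 0)
  (hlim : limit1_in (fun x => Rpower x (- n) * phi x) (fun x => 0 < x) C 0)
  (hG1 : is_Gamma (n + 1) G1) (hG52 : is_Gamma (n + 5 / 2) G52)
  (hG72 : is_Gamma (n + 7 / 2) G72) :
  let An := sqrt PI * G1 / (2 * G52) in
  let Bn := 3 * sqrt PI * G1 / (4 * G72) in
  let eps := fun V => E0 / V - 1 in
  let gam := (2 * n + 5) / (2 * n + 3) in
  let K := 2 / 3 * Rpower (4 * sqrt 2 * PI * C) (- (2 / (2 * n + 3))) * Bn
           * Rpower An (- ((2 * n + 5) / (2 * n + 3))) in
  limit1_in (fun V => rho phi E0 V / (4 * sqrt 2 * PI * C * An * Rpower (eps V) (n + 3 / 2)))
    (fun V => 0 < V < E0) 1 E0 /\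
  limit1_in (fun V => pres phi E0 V /
                      (Rpower 2 (3 / 2) * (4 / 3) * PI * C * Bn * Rpower (eps V) (n + 5 / 2)))
    (fun V => 0 < V < E0) 1 E0 /\
  limit1_in (fun V => pres phi E0 V / (K * Rpower (rho phi E0 V) gam))
    (fun V => 0 < V < E0) 1 E0.
Proof.
  cbv zeta.
  assert (HG1 : G1 = Gam (n + 1)) by (apply isG_Gam; auto; lra).
  assert (HG52 : G52 = Gam (n + 5 / 2)) by (apply isG_Gam; auto; lra).
  assert (HG72 : G72 = Gam (n + 7 / 2)) by (apply isG_Gam; auto; lra).
  assert (HA : sqrt PI * G1 / (2 * G52) = Bf (n + 1) (3/2)) by (rewrite HG1, HG52, A_val; auto).
  assert (HB : 3 * sqrt PI * G1 / (4 * G72) = Bf (n + 1) (5/2)) by (rewrite HG1, HG72, B_val; auto).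
  rewrite HA, HB.
  assert (H1 := rho_asym phi E0 n C hE0 hn hC hcont hlim).
  assert (H2 := p_asym phi E0 n C hE0 hn hC hcont hlim).
  split; [exact H1|]. split; [exact H2|].
  set (A := Bf (n + 1) (3/2)) in *. set (B := Bf (n + 1) (5/2)) in *.
  assert (HAp : 0 < A) by (apply A_pos; auto). assert (HBp : 0 < B) by (apply B_pos; auto).
  set (g := (2 * n + 5) / (2 * n + 3)).
  set (a := 4 * sqrt 2 * PI * C * A).
  set (b := Rpower 2 (3 / 2) * (4 / 3) * PI * C * B).
  set (K := 2 / 3 * Rpower (4 * sqrt 2 * PI * C) (- (2 / (2 * n + 3))) * B * Rpower A (- ((2 * n + 5) / (2 * n + 3)))).
  assert (HPI := PI_RGT_0). assert (Hs2 : 0 < sqrt 2) by (apply sqrt_lt_R0; lra).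
  assert (Hc : 0 < 4 * sqrt 2 * PI * C) by (apply Rmult_lt_0_compat; [apply Rmult_lt_0_compat|]; lra).
  assert (Ha : 0 < a) by (unfold a; apply Rmult_lt_0_compat; auto).
  assert (H232 : Rpower 2 (3 / 2) = 2 * sqrt 2).
  { replace (3 / 2) with (1 + / 2) by field. rewrite Rpower_plus, Rpower_1, Rpower_sqrt by lra. reflexivity. }
  assert (Hb : 0 < b) by (unfold b; rewrite H232; apply Rmult_lt_0_compat; [apply Rmult_lt_0_compat|]; try lra;
     apply Rmult_lt_0_compat; [apply Rmult_lt_0_compat|]; lra).
  assert (HK : K * Rpower a g = b).
  { unfold K, a, b, g. rewrite <- (Rpower_mult_distr (4 * sqrt 2 * PI * C) A) by auto.
    transitivity (2 / 3 * B * (Rpower (4 * sqrt 2 * PI * C) (- (2 / (2 * n + 3))) * Rpower (4 * sqrt 2 * PI * C) ((2 * n + 5) / (2 * n + 3))) *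
                  (Rpower A (- ((2 * n + 5) / (2 * n + 3))) * Rpower A ((2 * n + 5) / (2 * n + 3)))). ring.
    rewrite <- !Rpower_plus.
    replace (- (2 / (2 * n + 3)) + (2 * n + 5) / (2 * n + 3)) with 1 by (field; lra).
    replace (- ((2 * n + 5) / (2 * n + 3)) + (2 * n + 5) / (2 * n + 3)) with 0 by ring.
    rewrite Rpower_1, Rpower_O by auto. rewrite H232. field. }
  destruct (lim_elim _ _ _ _ H1 (1/2) ltac:(lra)) as [r [Hr Hr1]].
  assert (H3 : limit1_in (fun V => pres phi E0 V / (b * Rpower (E0 / V - 1) (n + 5 / 2)) *
                 / Rpower (rho phi E0 V / (a * Rpower (E0 / V - 1) (n + 3 / 2))) g) (fun V => 0 < V < E0) (1 * / 1) E0).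
  { apply limit_mul.
    - apply (lim_ext_loc _ (fun V => pres phi E0 V /
        (Rpower 2 (3 / 2) * (4 / 3) * PI * C * B * Rpower ((fun V => E0 / V - 1) V) (n + 5 / 2))) _ _ _ 1 ltac:(lra)).
      intros; unfold b; reflexivity. exact H2.
    - apply limit_inv; [|lra].
      assert (H4 := lim_comp_cont _ (fun t => Rpower t g) _ _ _ H1 (Rpower_cont 1 g ltac:(lra))).
      assert (HR1 : Rpower 1 g = 1) by (unfold Rpower; rewrite ln_1, Rmult_0_r, exp_0; auto). cbv beta in H4. rewrite HR1 in H4.
      apply (lim_ext_loc _ (fun x => Rpower (rho phi E0 x /
        (4 * sqrt 2 * PI * C * A * Rpower ((fun V => E0 / V - 1) x) (n + 3 / 2))) g) _ _ _ 1 ltac:(lra)).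
      intros; unfold a; reflexivity. exact H4. }
  rewrite Rmult_1_l, Rinv_1 in H3.
  apply (lim_ext_loc _ (fun V => pres phi E0 V / (b * Rpower (E0 / V - 1) (n + 5 / 2)) *
                 / Rpower (rho phi E0 V / (a * Rpower (E0 / V - 1) (n + 3 / 2))) g) _ _ _ r Hr); auto.
  intros V HV Hd. specialize (Hr1 V HV Hd). apply abs_lt_b in Hr1.
  assert (He := eps_pos E0 V hE0 HV).
  apply alg3; auto. apply Rpower_pos. apply Rpower_pos.
  unfold a. replace (4 * sqrt 2 * PI * C * A * Rpower (E0 / V - 1) (n + 3 / 2)) with
    (4 * sqrt 2 * PI * C * A * Rpower (E0 / V - 1) (n + 3 / 2)) by reflexivity. lra.
  unfold g. rewrite Rpower_mult. f_equal. field. lra.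
Qed.
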